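(* Let $K\geqslant 1$ and $f\in\mathrm{HQR}_K(\mathbb{U},\mathbb{S})$. Then $$d_{\mathbb{S}}(f(z_1),f(z_2))\leqslant K\, d_{\mathbb{U}}(z_1,z_2)\quad\text{for all } z_1,z_2\in\mathbb{U}.$$
   Context: $\mathbb{U}=\{z\in\mathbb{C}:|z|<1\}$, $\mathbb{S}=\{z\in\mathbb{C}:-1<\operatorname{Re} z<1\}$. For a hyperbolic domain $\Omega$ with density $\rho_\Omega$, $d_\Omega(z_1,z_2)=\inf_\gamma\int_\gamma\rho_\Omega(z)|dz|$ over $C^1$ curves in $\Omega$ joining $z_1$ to $z_2$; here $\rho_{\mathbb{U}}(z)=\frac{2}{1-|z|^2}$ and $\rho_{\mathbb{S}}(z)=\frac{\pi}{2}\big/\cos\left(\frac{\pi}{2}\operatorname{Re} z\right)$. For domains $D,G\subset\mathbb{C}$, $\mathrm{HQR}_K(D,G)$ denotes the class of complex-valued harmonic $C^1$ maps $f:D\to G$ that are sense-preserving $K$-quasiregular, i.e. $|f_z(z)|>|f_{\bar z}(z)|$ and $\frac{|f_z(z)|+|f_{\bar z}(z)|}{|f_z(z)|-|f_{\bar z}(z)|}\leqslant K$ for all $z\in D$. *)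

(* Defs.v *)
From Stdlib Require Import Reals.
From Coquelicot Require Import Coquelicot.
Open Scope R_scope.

Definition px (g : R -> R -> R) (x y : R) : R := Derive (fun t => g t y) x.
Definition py (g : R -> R -> R) (x y : R) : R := Derive (fun t => g x t) y.

Definition C1_at (g : R -> R -> R) (p : R * R) : Prop :=
  ex_derive (fun t => g t (snd p)) (fst p) /\
  ex_derive (fun t => g (fst p) t) (snd p) /\
  continuous (fun q : R * R => g (fst q) (snd q)) p /\
  continuous (fun q : R * R => px g (fst q) (snd q)) p /\
  continuous (fun q : R * R => py g (fst q) (snd q)) p.

Definition ReF (f : C -> C) (x y : R) : R := fst (f (x, y)).
Definition ImF (f : C -> C) (x y : R) : R := snd (f (x, y)).

Definition harmonic_real_on (D : C -> Prop) (g : R -> R -> R) : Prop :=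
  forall p : C, D p ->
    C1_at g p /\ C1_at (px g) p /\ C1_at (py g) p /\
    px (px g) (fst p) (snd p) + py (py g) (fst p) (snd p) = 0.

Definition harmonic_on (D : C -> Prop) (f : C -> C) : Prop :=
  harmonic_real_on D (ReF f) /\ harmonic_real_on D (ImF f).

(* Wirtinger derivatives f_z = (f_x - i f_y)/2, f_zbar = (f_x + i f_y)/2 *)
Definition f_z (f : C -> C) (z : C) : C :=
  let ux := px (ReF f) (fst z) (snd z) in let uy := py (ReF f) (fst z) (snd z) in
  let vx := px (ImF f) (fst z) (snd z) in let vy := py (ImF f) (fst z) (snd z) in
  ((ux + vy) / 2, (vx - uy) / 2).
Definition f_zbar (f : C -> C) (z : C) : C :=
  let ux := px (ReF f) (fst z) (snd z) in let uy := py (ReF f) (fst z) (snd z) in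
  let vx := px (ImF f) (fst z) (snd z) in let vy := py (ImF f) (fst z) (snd z) in
  ((ux - vy) / 2, (vx + uy) / 2).

Definition HQR (K : R) (D G : C -> Prop) (f : C -> C) : Prop :=
  (forall z, D z -> G (f z)) /\
  harmonic_on D f /\
  (forall z, D z ->
     Cmod (f_z f z) > Cmod (f_zbar f z) /\
     (Cmod (f_z f z) + Cmod (f_zbar f z)) / (Cmod (f_z f z) - Cmod (f_zbar f z)) <= K).

Definition unit_disk (z : C) : Prop := Cmod z < 1.
Definition strip (z : C) : Prop := -1 < fst z < 1.

Definition rho_U (z : C) : R := 2 / (1 - (Cmod z) ^ 2).
Definition rho_S (z : C) : R := (PI / 2) / cos (PI / 2 * fst z).

(* C^1 curves gamma : [0,1] -> Om joining z1 to z2 (gamma is given on R;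
   differentiability with continuous derivative is required at each t in [0,1]) *)
Definition C1_curve (Om : C -> Prop) (g : R -> C) (z1 z2 : C) : Prop :=
  g 0 = z1 /\ g 1 = z2 /\
  (forall t, 0 <= t <= 1 -> Om (g t)) /\
  (forall t, 0 <= t <= 1 ->
     ex_derive (fun s => fst (g s)) t /\ ex_derive (fun s => snd (g s)) t /\
     continuous (fun s => Derive (fun r => fst (g r)) s) t /\
     continuous (fun s => Derive (fun r => snd (g r)) s) t).

Definition curve_deriv (g : R -> C) (t : R) : C :=
  (Derive (fun r => fst (g r)) t, Derive (fun r => snd (g r)) t).

Definition curve_length (rho : C -> R) (g : R -> C) : R :=
  RInt (fun t => rho (g t) * Cmod (curve_deriv g t)) 0 1.

Definition hdist (rho : C -> R) (Om : C -> Prop) (z1 z2 : C) : Rbar :=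
  Glb_Rbar (fun L => exists g, C1_curve Om g z1 z2 /\ L = curve_length rho g).

Definition d_U := hdist rho_U unit_disk.
Definition d_S := hdist rho_S strip.

(* Main.v *)
Require Import Defs.
From Stdlib Require Import Reals Lra Psatz.
From Coquelicot Require Import Coquelicot.
Open Scope R_scope.

Module P1.
Open Scope R_scope.

Section Cont.
Context {U : UniformSpace}.
Lemma cR_plus (f g : U -> R) x : continuous f x -> continuous g x -> continuous (fun y => f y + g y) x.
Proof. intros; apply (continuous_plus f g); auto. Qed.
Lemma cR_mult (f g : U -> R) x : continuous f x -> continuous g x -> continuous (fun y => f y * g y) x.
Proof. intros; apply (continuous_mult f g); auto. Qed.
Lemma cR_opp (f : U -> R) x : continuous f x -> continuous (fun y => - f y) x.
Proof. intros; apply (continuous_opp f); auto. Qed.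
Lemma cR_minus (f g : U -> R) x : continuous f x -> continuous g x -> continuous (fun y => f y - g y) x.
Proof. intros; apply cR_plus; auto; apply cR_opp; auto. Qed.
Lemma cR_const (c : R) x : continuous (fun _ : U => c) x.
Proof. apply continuous_const. Qed.
Lemma cR_comp (f : U -> R) (g : R -> R) x : continuous f x -> continuous g (f x) -> continuous (fun y => g (f y)) x.
Proof. intros; apply (continuous_comp f g); auto. Qed.
Lemma cR_inv (f : U -> R) x : continuous f x -> f x <> 0 -> continuous (fun y => / f y) x.
Proof. intros; apply (cR_comp f Rinv); auto.
  apply (continuous_Rinv_comp (fun t => t)); auto. apply continuous_id. Qed.
Lemma cR_div (f g : U -> R) x : continuous f x -> continuous g x -> g x <> 0 -> continuous (fun y => f y / g y) x.
Proof. intros; unfold Rdiv; apply cR_mult; auto; apply cR_inv; auto. Qed.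
Lemma cR_cos (f : U -> R) x : continuous f x -> continuous (fun y => cos (f y)) x.
Proof. intros; apply cR_comp; auto. exact (continuous_cos_comp (fun t => t) _ (continuous_id _)). Qed.
Lemma cR_sin (f : U -> R) x : continuous f x -> continuous (fun y => sin (f y)) x.
Proof. intros; apply cR_comp; auto. exact (continuous_sin_comp (fun t => t) _ (continuous_id _)). Qed.
Lemma cR_pow (f : U -> R) n x : continuous f x -> continuous (fun y => (f y)^n) x.
Proof. intros; induction n; simpl. apply cR_const. apply cR_mult; auto. Qed.
End Cont.

Lemma c2_fst (p : R * R) : continuous (fun q : R * R => fst q) p.
Proof. destruct p; apply continuous_fst. Qed.
Lemma c2_snd (p : R * R) : continuous (fun q : R * R => snd q) p.
Proof. destruct p; apply continuous_snd. Qed.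


Ltac cstep0 := match goal with
 | |- continuous (fun y => @?f y + @?g y) _ => apply (cR_plus f g)
 | |- continuous (fun y => @?f y - @?g y) _ => apply (cR_minus f g)
 | |- continuous (fun y => - @?f y) _ => apply (cR_opp f)
 | |- continuous (fun y => @?f y * @?g y) _ => apply (cR_mult f g)
 | |- continuous (fun y => @?f y / @?g y) _ => apply (cR_div f g)
 | |- continuous (fun y => / @?f y) _ => apply (cR_inv f)
 | |- continuous (fun y => (@?f y) ^ ?n) _ => apply (cR_pow f n)
 | |- continuous (fun y => cos (@?f y)) _ => apply (cR_cos f)
 | |- continuous (fun y => sin (@?f y)) _ => apply (cR_sin f)
 | |- continuous (fun y => fst y) _ => apply c2_fst
 | |- continuous (fun y => snd y) _ => apply c2_snd
 | |- continuous (fun y => ?c) _ => apply (cR_const c)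
 end.
Ltac cont := repeat cstep0.


End P1.
Import P1.

Module P2.
Open Scope R_scope.

Lemma MVT_abs (f : R -> R) (a b : R) (P : R -> Prop) :
  (forall z, Rabs (z - a) <= Rabs (b - a) -> ex_derive f z) ->
  exists c, Rabs (c - a) <= Rabs (b - a) /\ f b - f a = Derive f c * (b - a).
Proof.
  intros H.
  destruct (MVT_gen f a b (Derive f)) as [c [Hc E]].
  - intros z Hz. apply Derive_correct. apply H.
    unfold Rmin, Rmax in Hz; destruct (Rle_dec a b);
    unfold Rabs; repeat destruct Rcase_abs; lra.
  - intros z Hz. apply continuity_pt_filterlim.
    assert (Hz' : Rabs (z - a) <= Rabs (b - a)) by (
    unfold Rmin, Rmax in Hz; destruct (Rle_dec a b);
    unfold Rabs; repeat destruct Rcase_abs; lra).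
    exact (ex_derive_continuous f z (H z Hz')).
  - exists c; split; auto.
    unfold Rmin, Rmax in Hc; destruct (Rle_dec a b);
    unfold Rabs; repeat destruct Rcase_abs; lra.
Qed.

Lemma C1_diff (g : R -> R -> R) x y :
  locally_2d (fun u v => ex_derive (fun z => g z v) u /\ ex_derive (fun z => g u z) v) x y ->
  continuity_2d_pt (fun u v => Derive (fun z => g z v) u) x y ->
  continuity_2d_pt (fun u v => Derive (fun z => g u z) v) x y ->
  differentiable_pt_lim g x y (Derive (fun z => g z y) x) (Derive (fun z => g x z) y).
Proof.
  intros [d0 H0] H1 H2 eps.
  destruct (H1 (pos_div_2 eps)) as [d1 H1'].
  destruct (H2 (pos_div_2 eps)) as [d2 H2'].
  assert (Hd : 0 < Rmin d0 (Rmin d1 d2)).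
  { apply Rmin_pos; [apply cond_pos| apply Rmin_pos; apply cond_pos]. }
  exists (mkposreal _ Hd). simpl. intros u v Hu Hv.
  assert (Hu0 : Rabs (u - x) < d0) by (eapply Rlt_le_trans; [apply Hu| apply Rmin_l]).
  assert (Hv0 : Rabs (v - y) < d0) by (eapply Rlt_le_trans; [apply Hv| apply Rmin_l]).
  assert (Hu1 : Rabs (u - x) < d1) by (eapply Rlt_le_trans; [apply Hu| eapply Rle_trans; [apply Rmin_r| apply Rmin_l]]).
  assert (Hv1 : Rabs (v - y) < d1) by (eapply Rlt_le_trans; [apply Hv| eapply Rle_trans; [apply Rmin_r| apply Rmin_l]]).
  assert (Hv2 : Rabs (v - y) < d2) by (eapply Rlt_le_trans; [apply Hv| eapply Rle_trans; [apply Rmin_r| apply Rmin_r]]).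
  destruct (MVT_abs (fun z => g z v) x u (fun _ => True)) as [c1 [Hc1 E1]].
  { intros z Hz. apply (H0 z v); lra. }
  destruct (MVT_abs (fun z => g x z) y v (fun _ => True)) as [c2 [Hc2 E2]].
  { intros z Hz. apply (H0 x z); [rewrite Rminus_eq_0, Rabs_R0; apply cond_pos | lra]. }
  assert (A1 := H1' c1 v ltac:(lra) Hv1). simpl in A1.
  assert (A2 := H2' x c2 ltac:(rewrite Rminus_eq_0, Rabs_R0; apply cond_pos) ltac:(lra)). simpl in A2.
  replace (g u v - g x y - (Derive (fun z => g z y) x * (u - x) + Derive (fun z => g x z) y * (v - y)))
    with ((Derive (fun z => g z v) c1 - Derive (fun z => g z y) x) * (u - x)
          + (Derive (fun z => g x z) c2 - Derive (fun z => g x z) y) * (v - y)) by lra.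
  eapply Rle_trans; [apply Rabs_triang|].
  rewrite !Rabs_mult.
  assert (M1 := Rmax_l (Rabs (u - x)) (Rabs (v - y))).
  assert (M2 := Rmax_r (Rabs (u - x)) (Rabs (v - y))).
  assert (P1 := Rabs_pos (u - x)). assert (P2 := Rabs_pos (v - y)).
  assert (P3 := Rabs_pos (Derive (fun z => g z v) c1 - Derive (fun z => g z y) x)).
  assert (P4 := Rabs_pos (Derive (fun z => g x z) c2 - Derive (fun z => g x z) y)).
  nra.
Qed.

Lemma chain2 (g : R -> R -> R) (X Y : R -> R) t lx ly dX dY :
  differentiable_pt_lim g (X t) (Y t) lx ly ->
  is_derive X t dX -> is_derive Y t dY ->
  is_derive (fun s => g (X s) (Y s)) t (lx * dX + ly * dY).
Proof.
  intros Hg HX HY. apply is_derive_Reals.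
  apply derivable_pt_lim_comp_2d; auto; apply is_derive_Reals; auto.
Qed.

End P2.
Import P2.

Module P3.
Open Scope R_scope.

Definition Dk (x y : R) := x * x + y * y < 1.

Lemma unit_disk_Dk x y : unit_disk (x, y) <-> Dk x y.
Proof.
  unfold unit_disk, Dk, Cmod; cbn [fst snd].
  replace (x ^ 2 + y ^ 2) with (x * x + y * y) by ring.
  split; intros H.
  - assert (0 <= x * x + y * y) by nra.
    destruct (Rlt_or_le (x*x+y*y) 1) as [h|h]; auto.
    apply sqrt_le_1_alt in h. rewrite sqrt_1 in h. lra.
  - rewrite <- sqrt_1. apply sqrt_lt_1_alt. nra.
Qed.

Lemma Dk_open x y : Dk x y -> locally_2d Dk x y.
Proof.
  unfold Dk; intros H.
  assert (Hd : 0 < (1 - (x*x+y*y)) / 7) by lra.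
  exists (mkposreal _ Hd); simpl; intros u v Hu Hv.
  apply Rabs_def2 in Hu; apply Rabs_def2 in Hv.
  assert (0 <= x * x) by apply Rle_0_sqr. assert (0 <= y * y) by apply Rle_0_sqr.
  assert (-1 < x < 1) by (split; nra). assert (-1 < y < 1) by (split; nra).
  set (d := (1 - (x * x + y * y)) / 7) in *.
  assert (d < 1) by (unfold d; lra).
  assert (0 < d) by (unfold d; lra).
  assert (A1 : x * (u - x) < d).
  { assert (0 < (1 - x) * (d - (u - x))) by (apply Rmult_lt_0_compat; lra).
    assert (0 < (1 + x) * (d + (u - x))) by (apply Rmult_lt_0_compat; lra). nra. }
  assert (A2 : y * (v - y) < d).
  { assert (0 < (1 - y) * (d - (v - y))) by (apply Rmult_lt_0_compat; lra).
    assert (0 < (1 + y) * (d + (v - y))) by (apply Rmult_lt_0_compat; lra). nra. }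
  assert (d * d < d) by (assert (0 < d * (1 - d)) by (apply Rmult_lt_0_compat; lra); nra).
  assert (A3 : (u - x) * (u - x) < d).
  { assert (0 < (d - (u - x)) * (d + (u - x))) by (apply Rmult_lt_0_compat; lra). nra. }
  assert (A4 : (v - y) * (v - y) < d).
  { assert (0 < (d - (v - y)) * (d + (v - y))) by (apply Rmult_lt_0_compat; lra). nra. }
  replace (u * u + v * v) with (x * x + y * y + 2 * (x * (u - x)) + 2 * (y * (v - y)) + (u - x) * (u - x) + (v - y) * (v - y)) by ring.
  unfold d in *; lra.
Qed.

Lemma cont_2d (g : R -> R -> R) x y :
  continuous (fun q : R * R => g (fst q) (snd q)) (x, y) -> continuity_2d_pt g x y.
Proof. intros H; apply continuity_2d_pt_filterlim; exact H. Qed.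

Lemma locally_2d_and (P Q : R -> R -> Prop) x y :
  locally_2d P x y -> locally_2d Q x y -> locally_2d (fun u v => P u v /\ Q u v) x y.
Proof.
  intros [d1 H1] [d2 H2].
  exists (mkposreal _ (Rmin_pos _ _ (cond_pos d1) (cond_pos d2))); simpl; intros u v Hu Hv.
  split; [apply H1 | apply H2]; eapply Rlt_le_trans; eauto; first [apply Rmin_l | apply Rmin_r].
Qed.

Lemma locally_2d_impl' (P Q : R -> R -> Prop) x y :
  (forall u v, P u v -> Q u v) -> locally_2d P x y -> locally_2d Q x y.
Proof. intros H [d Hd]; exists d; intros; apply H, Hd; auto. Qed.

Section Harm.
Variable g : R -> R -> R.
Hypothesis Hg : harmonic_real_on unit_disk g.

Lemma hC1 x y : Dk x y -> C1_at g (x, y) /\ C1_at (px g) (x, y) /\ C1_at (py g) (x, y) /\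
   px (px g) x y + py (py g) x y = 0.
Proof. intros H; apply (Hg (x, y)); apply unit_disk_Dk; auto. Qed.

Lemma C1_at_diff (h : R -> R -> R) x y :
  locally_2d (fun u v => C1_at h (u, v)) x y ->
  differentiable_pt_lim h x y (px h x y) (py h x y).
Proof.
  intros L. apply C1_diff.
  - eapply locally_2d_impl'; [|exact L]. intros u v [A [B _]]; split; auto.
  - destruct L as [d Hd]. assert (Hd' := Hd x y).
    rewrite !Rminus_eq_0, Rabs_R0 in Hd'. destruct (Hd' (cond_pos d) (cond_pos d)) as [_ [_ [_ [A _]]]].
    apply cont_2d; exact A.
  - destruct L as [d Hd]. assert (Hd' := Hd x y).
    rewrite !Rminus_eq_0, Rabs_R0 in Hd'. destruct (Hd' (cond_pos d) (cond_pos d)) as [_ [_ [_ [_ A]]]].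
    apply cont_2d; exact A.
Qed.

Lemma h_diff x y : Dk x y -> differentiable_pt_lim g x y (px g x y) (py g x y).
Proof. intros H; apply C1_at_diff. eapply locally_2d_impl'; [|apply Dk_open, H].
  intros u v Huv; destruct (hC1 u v Huv) as [A _]; exact A. Qed.
Lemma hx_diff x y : Dk x y -> differentiable_pt_lim (px g) x y (px (px g) x y) (py (px g) x y).
Proof. intros H; apply C1_at_diff. eapply locally_2d_impl'; [|apply Dk_open, H].
  intros u v Huv; destruct (hC1 u v Huv) as [_ [A _]]; exact A. Qed.
Lemma hy_diff x y : Dk x y -> differentiable_pt_lim (py g) x y (px (py g) x y) (py (py g) x y).
Proof. intros H; apply C1_at_diff. eapply locally_2d_impl'; [|apply Dk_open, H].
  intros u v Huv; destruct (hC1 u v Huv) as [_ [_ [A _]]]; exact A. Qed.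

Lemma h_lap x y : Dk x y -> px (px g) x y + py (py g) x y = 0.
Proof. intros H; destruct (hC1 x y H) as [_ [_ [_ A]]]; exact A. Qed.

Lemma h_cont x y : Dk x y ->
  continuous (fun q : R * R => g (fst q) (snd q)) (x, y) /\
  continuous (fun q : R * R => px g (fst q) (snd q)) (x, y) /\
  continuous (fun q : R * R => py g (fst q) (snd q)) (x, y) /\
  continuous (fun q : R * R => px (px g) (fst q) (snd q)) (x, y) /\
  continuous (fun q : R * R => py (px g) (fst q) (snd q)) (x, y) /\
  continuous (fun q : R * R => px (py g) (fst q) (snd q)) (x, y) /\
  continuous (fun q : R * R => py (py g) (fst q) (snd q)) (x, y).
Proof.
  intros H; destruct (hC1 x y H) as [[_ [_ [A [B C]]]] [[_ [_ [_ [D E]]]] [[_ [_ [_ [F G]]]] _]]].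
  repeat split; auto.
Qed.
End Harm.

End P3.
Import P3.

Module P4.
Open Scope R_scope.

Section Mob.
Variables a b c s : R.

Definition mre (x1 y1 x2 y2 : R) := x1 * x2 - y1 * y2.
Definition mim (x1 y1 x2 y2 : R) := x1 * y2 + y1 * x2.

Definition D1 r E1 E2 := 1 + a * (r * E1) + b * (r * E2).
Definition D2 r E1 E2 := a * (r * E2) - b * (r * E1).
Definition PP r E1 E2 := D1 r E1 E2 ^ 2 + D2 r E1 E2 ^ 2.
Definition kk := 1 - a ^ 2 - b ^ 2.

Definition Xf r E1 E2 := ((r * E1 + a) * D1 r E1 E2 + (r * E2 + b) * D2 r E1 E2) / PP r E1 E2.
Definition Yf r E1 E2 := ((r * E2 + b) * D1 r E1 E2 - (r * E1 + a) * D2 r E1 E2) / PP r E1 E2.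
Definition Xrf r E1 E2 := kk * ((D1 r E1 E2 ^ 2 - D2 r E1 E2 ^ 2) * E1 + 2 * D1 r E1 E2 * D2 r E1 E2 * E2) / PP r E1 E2 ^ 2.
Definition Yrf r E1 E2 := kk * ((D1 r E1 E2 ^ 2 - D2 r E1 E2 ^ 2) * E2 - 2 * D1 r E1 E2 * D2 r E1 E2 * E1) / PP r E1 E2 ^ 2.

Lemma Xf_dr r E1 E2 : PP r E1 E2 <> 0 -> is_derive (fun r => Xf r E1 E2) r (Xrf r E1 E2).
Proof.
  intros H. unfold Xf, Xrf, PP, D1, D2, kk in *. auto_derive; auto. field. auto.
Qed.

Definition Q1 r E1 E2 := D1 r E1 E2 ^ 2 - D2 r E1 E2 ^ 2.
Definition Q2 r E1 E2 := - (2 * D1 r E1 E2 * D2 r E1 E2).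
Definition C3re r E1 E2 := mre (Q1 r E1 E2) (Q2 r E1 E2) (D1 r E1 E2) (- D2 r E1 E2).
Definition C3im r E1 E2 := mim (Q1 r E1 E2) (Q2 r E1 E2) (D1 r E1 E2) (- D2 r E1 E2).
Definition ZEre E1 E2 := mre a (- b) (E1 ^ 2 - E2 ^ 2) (2 * E1 * E2).
Definition ZEim E1 E2 := mim a (- b) (E1 ^ 2 - E2 ^ 2) (2 * E1 * E2).
Definition Xrrf r E1 E2 := - 2 * kk * mre (ZEre E1 E2) (ZEim E1 E2) (C3re r E1 E2) (C3im r E1 E2) / PP r E1 E2 ^ 3.
Definition Yrrf r E1 E2 := - 2 * kk * mim (ZEre E1 E2) (ZEim E1 E2) (C3re r E1 E2) (C3im r E1 E2) / PP r E1 E2 ^ 3.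

Lemma Yf_dr r E1 E2 : PP r E1 E2 <> 0 -> is_derive (fun r => Yf r E1 E2) r (Yrf r E1 E2).
Proof.
  intros H. unfold Yf, Yrf, PP, D1, D2, kk in *. auto_derive; auto. field. auto.
Qed.
Lemma Xrf_dr r E1 E2 : PP r E1 E2 <> 0 -> is_derive (fun r => Xrf r E1 E2) r (Xrrf r E1 E2).
Proof.
  intros H. unfold Xrrf, Xrf, C3re, C3im, ZEre, ZEim, Q1, Q2, mre, mim, PP, D1, D2, kk in *.
  auto_derive; auto. field. auto.
Qed.
Lemma Yrf_dr r E1 E2 : PP r E1 E2 <> 0 -> is_derive (fun r => Yrf r E1 E2) r (Yrrf r E1 E2).
Proof.
  intros H. unfold Yrrf, Yrf, C3re, C3im, ZEre, ZEim, Q1, Q2, mre, mim, PP, D1, D2, kk in *.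
  auto_derive; auto. field. auto.
Qed.

Definition E1 t := c * cos t - s * sin t.
Definition E2 t := s * cos t + c * sin t.

Lemma Xf_dt r t : PP r (E1 t) (E2 t) <> 0 ->
  is_derive (fun t => Xf r (E1 t) (E2 t)) t (- r * Yrf r (E1 t) (E2 t)).
Proof.
  intros H. unfold Xf, Yrf, PP, D1, D2, kk, E1, E2 in *. auto_derive; auto. field. auto.
Qed.
Lemma Yf_dt r t : PP r (E1 t) (E2 t) <> 0 ->
  is_derive (fun t => Yf r (E1 t) (E2 t)) t (r * Xrf r (E1 t) (E2 t)).
Proof.
  intros H. unfold Yf, Xrf, PP, D1, D2, kk, E1, E2 in *. auto_derive; auto. field. auto.
Qed.

Lemma Xt_dt r t : PP r (E1 t) (E2 t) <> 0 ->
  is_derive (fun t => - r * Yrf r (E1 t) (E2 t)) t (- r ^ 2 * Xrrf r (E1 t) (E2 t) - r * Xrf r (E1 t) (E2 t)).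
Proof.
  intros H. unfold Xrrf, Xrf, Yrf, C3re, C3im, ZEre, ZEim, Q1, Q2, mre, mim, PP, D1, D2, kk, E1, E2 in *.
  auto_derive; auto. field. auto.
Qed.
Lemma Yt_dt r t : PP r (E1 t) (E2 t) <> 0 ->
  is_derive (fun t => r * Xrf r (E1 t) (E2 t)) t (- r ^ 2 * Yrrf r (E1 t) (E2 t) - r * Yrf r (E1 t) (E2 t)).
Proof.
  intros H. unfold Yrrf, Xrf, Yrf, C3re, C3im, ZEre, ZEim, Q1, Q2, mre, mim, PP, D1, D2, kk, E1, E2 in *.
  auto_derive; auto. field. auto.
Qed.

Lemma E_norm t : c ^ 2 + s ^ 2 = 1 -> E1 t ^ 2 + E2 t ^ 2 = 1.
Proof. intros H. unfold E1, E2.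
  replace ((c * cos t - s * sin t) ^ 2 + (s * cos t + c * sin t) ^ 2) with ((c^2 + s^2) * (sin t ^ 2 + cos t ^ 2)) by ring.
  assert (sin t ^2 + cos t^2 = 1) by (rewrite <- (sin2_cos2 t); unfold Rsqr; ring).
  rewrite H, H0. ring. Qed.

Lemma PP_pos r e1 e2 : a ^ 2 + b ^ 2 < 1 -> r ^ 2 < 1 -> e1 ^ 2 + e2 ^ 2 = 1 -> 0 < PP r e1 e2.
Proof.
  intros Ha Hr He. unfold PP, D1, D2.
  set (t := r * (a * e1 + b * e2)).
  assert (Ht : t ^ 2 <= r ^ 2 * ((a ^ 2 + b ^ 2) * (e1 ^ 2 + e2 ^ 2))).
  { unfold t. assert (0 <= r^2) by nra.
    assert ((a * e1 + b * e2) ^ 2 <= (a ^ 2 + b ^ 2) * (e1 ^ 2 + e2 ^ 2)).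
    { assert (0 <= (a * e2 - b * e1) ^ 2) by (apply pow2_ge_0).
      assert (Id : (a * e1 + b * e2) ^ 2 + (a * e2 - b * e1) ^ 2 = (a ^ 2 + b ^ 2) * (e1 ^ 2 + e2 ^ 2)) by ring.
      lra. }
    replace ((r * (a * e1 + b * e2)) ^ 2) with (r^2 * (a * e1 + b * e2) ^ 2) by ring. nra. }
  rewrite He, Rmult_1_r in Ht. assert (t ^ 2 < 1).
  { eapply Rle_lt_trans; [exact Ht|]. assert (0 <= r^2) by apply pow2_ge_0.
    assert (0 <= a^2 + b^2) by (assert (0 <= a^2) by apply pow2_ge_0; assert (0 <= b^2) by apply pow2_ge_0; lra).
    nra. }
  replace (1 + a * (r * e1) + b * (r * e2)) with (1 + t) by (unfold t; ring).
  assert (-1 < t) by nra.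
  assert (0 < (1 + t) ^ 2) by (apply pow_lt; lra).
  assert (0 <= (a * (r * e2) - b * (r * e1)) ^ 2) by apply pow2_ge_0. lra.
Qed.

Lemma XY_disk r e1 e2 : a ^ 2 + b ^ 2 < 1 -> r ^ 2 < 1 -> e1 ^ 2 + e2 ^ 2 = 1 ->
  Xf r e1 e2 * Xf r e1 e2 + Yf r e1 e2 * Yf r e1 e2 < 1.
Proof.
  intros Ha Hr He. assert (HP := PP_pos r e1 e2 Ha Hr He).
  assert (E : Xf r e1 e2 * Xf r e1 e2 + Yf r e1 e2 * Yf r e1 e2 =
     ((r * e1 + a) ^ 2 + (r * e2 + b) ^ 2) / PP r e1 e2).
  { unfold Xf, Yf, PP in *. field. lra. }
  rewrite E. apply (Rmult_lt_reg_r (PP r e1 e2)); auto. unfold Rdiv; rewrite Rmult_assoc, Rinv_l, Rmult_1_r, Rmult_1_l by lra.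
  assert (E2' : PP r e1 e2 - ((r * e1 + a) ^ 2 + (r * e2 + b) ^ 2) = (1 - (a^2+b^2)) * (1 - r^2 * (e1^2+e2^2))).
  { unfold PP, D1, D2. ring. }
  rewrite He in E2'. nra.
Qed.

Lemma at0 e1 e2 : Xf 0 e1 e2 = a /\ Yf 0 e1 e2 = b /\ Xrf 0 e1 e2 = kk * e1 /\ Yrf 0 e1 e2 = kk * e2.
Proof.
  unfold Xf, Yf, Xrf, Yrf, PP, D1, D2. repeat split; field_simplify; try reflexivity; lra.
Qed.


Section C.
Variable p : R * R.
Hypothesis H : PP (fst p) (E1 (snd p)) (E2 (snd p)) <> 0.
Local Notation cq F := (continuous (fun q : R * R => F (fst q) (E1 (snd q)) (E2 (snd q))) p).

Lemma cE1 : continuous (fun q : R * R => E1 (snd q)) p.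
Proof. unfold E1; cont. Qed.
Lemma cE2 : continuous (fun q : R * R => E2 (snd q)) p.
Proof. unfold E2; cont. Qed.

Ltac cstep := first [ apply cE1 | apply cE2 | cstep0 | assumption ].

Lemma cD1 : cq D1. Proof. unfold D1; repeat cstep. Qed.
Lemma cD2 : cq D2. Proof. unfold D2; repeat cstep. Qed.
Lemma cPP : cq PP. Proof. unfold PP; repeat first [apply cD1 | apply cD2 | cstep]. Qed.
Lemma cQ1 : cq Q1. Proof. unfold Q1; repeat first [apply cD1 | apply cD2 | cstep]. Qed.
Lemma cQ2 : cq Q2. Proof. unfold Q2; repeat first [apply cD1 | apply cD2 | cstep]. Qed.
Lemma cC3re : cq C3re. Proof. unfold C3re, mre; repeat first [apply cD1 | apply cD2 | apply cQ1 | apply cQ2 | cstep]. Qed.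
Lemma cC3im : cq C3im. Proof. unfold C3im, mim; repeat first [apply cD1 | apply cD2 | apply cQ1 | apply cQ2 | cstep]. Qed.
Lemma cZEre : continuous (fun q : R * R => ZEre (E1 (snd q)) (E2 (snd q))) p.
Proof. unfold ZEre, mre; repeat cstep. Qed.
Lemma cZEim : continuous (fun q : R * R => ZEim (E1 (snd q)) (E2 (snd q))) p.
Proof. unfold ZEim, mim; repeat cstep. Qed.

Ltac cbig := repeat first [apply cD1 | apply cD2 | apply cPP | apply cC3re | apply cC3im
   | apply cZEre | apply cZEim | cstep | (apply pow_nonzero; assumption)].

Lemma cXf : cq Xf. Proof. unfold Xf; cbig. Qed.
Lemma cYf : cq Yf. Proof. unfold Yf; cbig. Qed.
Lemma cXrf : cq Xrf. Proof. unfold Xrf; cbig. Qed.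
Lemma cYrf : cq Yrf. Proof. unfold Yrf; cbig. Qed.
Lemma cXrrf : cq Xrrf. Proof. unfold Xrrf, mre; cbig. Qed.
Lemma cYrrf : cq Yrrf. Proof. unfold Yrrf, mim; cbig. Qed.
End C.
End Mob.

End P4.
Import P4.

Module P5.
Open Scope R_scope.

Lemma is_derive_eq (f : R -> R) x l l' : is_derive f x l -> l = l' -> is_derive f x l'.
Proof. intros H ->; exact H. Qed.

Lemma isd_plus (f g : R -> R) x df dg : is_derive f x df -> is_derive g x dg ->
  is_derive (fun t => f t + g t) x (df + dg).
Proof. intros; apply @is_derive_plus; auto. Qed.
Lemma isd_mult (f g : R -> R) x df dg : is_derive f x df -> is_derive g x dg ->
  is_derive (fun t => f t * g t) x (df * g x + f x * dg).
Proof. intros; apply @is_derive_mult; auto. intros; apply Rmult_comm. Qed.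

Lemma cont_slice (F : R -> R -> R) r t :
  continuous (fun q : R * R => F (fst q) (snd q)) (r, t) -> continuous (fun t => F r t) t.
Proof.
  intros H.
  apply (continuous_comp_2 (U := R_UniformSpace) (fun _ => r) (fun t => t) F t); auto.
  apply continuous_const. apply continuous_id.
Qed.

Section Comp.
Variable g : R -> R -> R.
Hypothesis Hg : harmonic_real_on unit_disk g.
Variables a b c s : R.
Hypothesis Hab : a ^ 2 + b ^ 2 < 1.
Hypothesis Hcs : c ^ 2 + s ^ 2 = 1.

Definition X r t := Xf a b r (E1 c s t) (E2 c s t).
Definition Y r t := Yf a b r (E1 c s t) (E2 c s t).
Definition Xr r t := Xrf a b r (E1 c s t) (E2 c s t).
Definition Yr r t := Yrf a b r (E1 c s t) (E2 c s t).
Definition Xrr r t := Xrrf a b r (E1 c s t) (E2 c s t).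
Definition Yrr r t := Yrrf a b r (E1 c s t) (E2 c s t).
Definition Xt r t := - r * Yr r t.
Definition Yt r t := r * Xr r t.
Definition Xtt r t := - r ^ 2 * Xrr r t - r * Xr r t.
Definition Ytt r t := - r ^ 2 * Yrr r t - r * Yr r t.

Definition U r t := g (X r t) (Y r t).
Definition Ur r t := px g (X r t) (Y r t) * Xr r t + py g (X r t) (Y r t) * Yr r t.
Definition Urr r t :=
  (px (px g) (X r t) (Y r t) * Xr r t + py (px g) (X r t) (Y r t) * Yr r t) * Xr r t
  + px g (X r t) (Y r t) * Xrr r t
  + (px (py g) (X r t) (Y r t) * Xr r t + py (py g) (X r t) (Y r t) * Yr r t) * Yr r t
  + py g (X r t) (Y r t) * Yrr r t.
Definition Ut r t := px g (X r t) (Y r t) * Xt r t + py g (X r t) (Y r t) * Yt r t.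
Definition Utt r t :=
  (px (px g) (X r t) (Y r t) * Xt r t + py (px g) (X r t) (Y r t) * Yt r t) * Xt r t
  + px g (X r t) (Y r t) * Xtt r t
  + (px (py g) (X r t) (Y r t) * Xt r t + py (py g) (X r t) (Y r t) * Yt r t) * Yt r t
  + py g (X r t) (Y r t) * Ytt r t.

Lemma PPne r t : r ^ 2 < 1 -> PP a b r (E1 c s t) (E2 c s t) <> 0.
Proof. intros Hr. apply Rgt_not_eq, PP_pos; auto. apply E_norm; auto. Qed.

Lemma XYD r t : r ^ 2 < 1 -> Dk (X r t) (Y r t).
Proof. intros Hr. apply XY_disk; auto. apply E_norm; auto. Qed.

Lemma U_dr r t : r ^ 2 < 1 -> is_derive (fun r => U r t) r (Ur r t).
Proof.
  intros Hr. unfold U, Ur. apply chain2.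
  - apply h_diff; auto. apply XYD; auto.
  - apply Xf_dr, PPne; auto.
  - apply Yf_dr, PPne; auto.
Qed.

Lemma Ur_dr r t : r ^ 2 < 1 -> is_derive (fun r => Ur r t) r (Urr r t).
Proof.
  intros Hr. unfold Ur.
  eapply is_derive_eq.
  - apply isd_plus; apply isd_mult.
    + apply chain2. apply hx_diff; auto. apply XYD; auto.
      apply Xf_dr, PPne; auto. apply Yf_dr, PPne; auto.
    + apply Xrf_dr, PPne; auto.
    + apply chain2. apply hy_diff; auto. apply XYD; auto.
      apply Xf_dr, PPne; auto. apply Yf_dr, PPne; auto.
    + apply Yrf_dr, PPne; auto.
  - unfold Urr, Xrr, Yrr, Xr, Yr, X, Y. simpl. ring.
Qed.

Lemma U_dt r t : r ^ 2 < 1 -> is_derive (fun t => U r t) t (Ut r t).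
Proof.
  intros Hr. unfold U, Ut. apply chain2.
  - apply h_diff; auto. apply XYD; auto.
  - apply Xf_dt, PPne; auto.
  - apply Yf_dt, PPne; auto.
Qed.

Lemma Ut_dt r t : r ^ 2 < 1 -> is_derive (fun t => Ut r t) t (Utt r t).
Proof.
  intros Hr. unfold Ut.
  eapply is_derive_eq.
  - apply isd_plus; apply isd_mult.
    + apply chain2. apply hx_diff; auto. apply XYD; auto.
      apply Xf_dt, PPne; auto. apply Yf_dt, PPne; auto.
    + unfold Xt, Yr. apply Xt_dt, PPne; auto.
    + apply chain2. apply hy_diff; auto. apply XYD; auto.
      apply Xf_dt, PPne; auto. apply Yf_dt, PPne; auto.
    + unfold Yt, Xr. apply Yt_dt, PPne; auto.
  - unfold Utt, Xtt, Ytt, Xt, Yt, Xrr, Yrr, Xr, Yr, X, Y. simpl. ring.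
Qed.

Lemma polar_lap r t : r ^ 2 < 1 -> r ^ 2 * Urr r t + r * Ur r t + Utt r t = 0.
Proof.
  intros Hr. assert (L := h_lap g Hg _ _ (XYD r t Hr)).
  unfold Urr, Ur, Utt, Xtt, Ytt, Xt, Yt.
  replace (py (py g) (X r t) (Y r t)) with (- px (px g) (X r t) (Y r t)) by lra.
  ring.
Qed.
End Comp.

End P5.
Import P5.

Module P6.
Open Scope R_scope.

Lemma loc2_sq x t : x ^ 2 < 1 -> locally_2d (fun u v => u ^ 2 < 1) x t.
Proof.
  intros H. set (d := (1 - x ^ 2) / 4). assert (Hd : 0 < d) by (unfold d; lra).
  exists (mkposreal _ Hd); simpl; intros u v Hu _.
  apply Rabs_def2 in Hu.
  assert (-1 < x < 1) by (split; nra).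
  assert (d < 1) by (unfold d; assert (0 <= x ^ 2) by apply pow2_ge_0; lra).
  assert (A1 : x * (u - x) < d).
  { assert (0 < (1 - x) * (d - (u - x))) by (apply Rmult_lt_0_compat; lra).
    assert (0 < (1 + x) * (d + (u - x))) by (apply Rmult_lt_0_compat; lra). nra. }
  assert (d * d < d) by (assert (0 < d * (1 - d)) by (apply Rmult_lt_0_compat; lra); nra).
  assert (A3 : (u - x) * (u - x) < d).
  { assert (0 < (d - (u - x)) * (d + (u - x))) by (apply Rmult_lt_0_compat; lra). nra. }
  replace (u ^ 2) with (x ^ 2 + 2 * (x * (u - x)) + (u - x) * (u - x)) by ring.
  unfold d in *; lra.
Qed.

Lemma loc_sq x : x ^ 2 < 1 -> locally x (fun y => y ^ 2 < 1).
Proof. intros H; apply (locally_2d_1d_const_y (fun u v => u ^ 2 < 1) x 0), loc2_sq, H. Qed.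

Lemma cont2d_ext (F G : R -> R -> R) x t :
  locally_2d (fun u v => F u v = G u v) x t -> F x t = G x t ->
  continuous (fun q : R * R => F (fst q) (snd q)) (x, t) -> continuity_2d_pt G x t.
Proof.
  intros L E H. apply continuity_2d_pt_filterlim.
  rewrite <- E.
  eapply filterlim_ext_loc; [| exact H].
  apply locally_2d_locally in L. exact L.
Qed.

Lemma param_deriv (F dF : R -> R -> R) lo hi x :
  (forall y t, y ^ 2 < 1 -> is_derive (fun z => F z t) y (dF y t)) ->
  x ^ 2 < 1 ->
  (forall t, continuous (fun q : R * R => dF (fst q) (snd q)) (x, t)) ->
  (forall y, y ^ 2 < 1 -> ex_RInt (F y) lo hi) ->
  is_derive (fun y => RInt (F y) lo hi) x (RInt (dF x) lo hi).
Proof.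
  intros HD Hx HC HI.
  assert (E : RInt (dF x) lo hi = RInt (fun t => Derive (fun u => F u t) x) lo hi).
  { apply RInt_ext; intros t _. symmetry; apply is_derive_unique, HD, Hx. }
  rewrite E.
  apply (is_derive_RInt_param F lo hi x).
  - eapply filter_imp; [| apply loc_sq, Hx]. intros y Hy t _. eexists; apply HD, Hy.
  - intros t _. apply (cont2d_ext dF); [| symmetry; apply is_derive_unique, HD, Hx | apply HC].
    eapply locally_2d_impl'; [| apply (loc2_sq x t Hx)].
    intros u v Hu. symmetry; apply is_derive_unique, HD, Hu.
  - eapply filter_imp; [| apply loc_sq, Hx]. intros y Hy. apply HI, Hy.
Qed.

Section Cont.
Variable g : R -> R -> R.
Hypothesis Hg : harmonic_real_on unit_disk g.
Variables a b c s : R.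
Hypothesis Hab : a ^ 2 + b ^ 2 < 1.
Hypothesis Hcs : c ^ 2 + s ^ 2 = 1.

Local Notation X := (X a b c s).
Local Notation Y := (Y a b c s).
Local Notation Xr := (Xr a b c s).
Local Notation Yr := (Yr a b c s).
Local Notation Xrr := (Xrr a b c s).
Local Notation Yrr := (Yrr a b c s).

Section P.
Variable p : R * R.
Hypothesis Hp : fst p ^ 2 < 1.
Lemma cX : continuous (fun q : R * R => X (fst q) (snd q)) p.
Proof. exact (cXf a b c s p (PPne a b c s Hab Hcs _ _ Hp)). Qed.
Lemma cY : continuous (fun q : R * R => Y (fst q) (snd q)) p.
Proof. exact (cYf a b c s p (PPne a b c s Hab Hcs _ _ Hp)). Qed.
Lemma cXr : continuous (fun q : R * R => Xr (fst q) (snd q)) p.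
Proof. exact (cXrf a b c s p (PPne a b c s Hab Hcs _ _ Hp)). Qed.
Lemma cYr : continuous (fun q : R * R => Yr (fst q) (snd q)) p.
Proof. exact (cYrf a b c s p (PPne a b c s Hab Hcs _ _ Hp)). Qed.
Lemma cXrr : continuous (fun q : R * R => Xrr (fst q) (snd q)) p.
Proof. exact (cXrrf a b c s p (PPne a b c s Hab Hcs _ _ Hp)). Qed.
Lemma cYrr : continuous (fun q : R * R => Yrr (fst q) (snd q)) p.
Proof. exact (cYrrf a b c s p (PPne a b c s Hab Hcs _ _ Hp)). Qed.

Lemma cH (h : R -> R -> R) :
  (forall x y, Dk x y -> continuous (fun q : R * R => h (fst q) (snd q)) (x, y)) ->
  continuous (fun q : R * R => h (X (fst q) (snd q)) (Y (fst q) (snd q))) p.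
Proof.
  intros Hh. apply (continuous_comp_2 (fun q : R * R => X (fst q) (snd q)) (fun q : R * R => Y (fst q) (snd q)) h).
  apply cX. apply cY. apply Hh. destruct p as [r t]; apply XYD; auto.
Qed.

Lemma hc0 : forall x y, Dk x y -> continuous (fun q : R * R => g (fst q) (snd q)) (x, y).
Proof. intros x y H; destruct (h_cont g Hg x y H) as [A _]; exact A. Qed.
Lemma hc1 : forall x y, Dk x y -> continuous (fun q : R * R => px g (fst q) (snd q)) (x, y).
Proof. intros x y H; destruct (h_cont g Hg x y H) as [_ [A _]]; exact A. Qed.
Lemma hc2 : forall x y, Dk x y -> continuous (fun q : R * R => py g (fst q) (snd q)) (x, y).
Proof. intros x y H; destruct (h_cont g Hg x y H) as [_ [_ [A _]]]; exact A. Qed.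
Lemma hc3 : forall x y, Dk x y -> continuous (fun q : R * R => px (px g) (fst q) (snd q)) (x, y).
Proof. intros x y H; destruct (h_cont g Hg x y H) as [_ [_ [_ [A _]]]]; exact A. Qed.
Lemma hc4 : forall x y, Dk x y -> continuous (fun q : R * R => py (px g) (fst q) (snd q)) (x, y).
Proof. intros x y H; destruct (h_cont g Hg x y H) as [_ [_ [_ [_ [A _]]]]]; exact A. Qed.
Lemma hc5 : forall x y, Dk x y -> continuous (fun q : R * R => px (py g) (fst q) (snd q)) (x, y).
Proof. intros x y H; destruct (h_cont g Hg x y H) as [_ [_ [_ [_ [_ [A _]]]]]]; exact A. Qed.
Lemma hc6 : forall x y, Dk x y -> continuous (fun q : R * R => py (py g) (fst q) (snd q)) (x, y).
Proof. intros x y H; destruct (h_cont g Hg x y H) as [_ [_ [_ [_ [_ [_ A]]]]]]; exact A. Qed.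

Ltac catom := match goal with
 | |- continuous (fun y => X (fst y) (snd y)) _ => apply cX
 | |- continuous (fun y => Y (fst y) (snd y)) _ => apply cY
 | |- continuous (fun y => Xr (fst y) (snd y)) _ => apply cXr
 | |- continuous (fun y => Yr (fst y) (snd y)) _ => apply cYr
 | |- continuous (fun y => Xrr (fst y) (snd y)) _ => apply cXrr
 | |- continuous (fun y => Yrr (fst y) (snd y)) _ => apply cYrr
 | |- continuous (fun y => g (X (fst y) (snd y)) (Y (fst y) (snd y))) _ => apply (cH g hc0)
 | |- continuous (fun y => px g (X (fst y) (snd y)) (Y (fst y) (snd y))) _ => apply (cH (px g) hc1)
 | |- continuous (fun y => py g (X (fst y) (snd y)) (Y (fst y) (snd y))) _ => apply (cH (py g) hc2)
 | |- continuous (fun y => px (px g) (X (fst y) (snd y)) (Y (fst y) (snd y))) _ => apply (cH (px (px g)) hc3)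
 | |- continuous (fun y => py (px g) (X (fst y) (snd y)) (Y (fst y) (snd y))) _ => apply (cH (py (px g)) hc4)
 | |- continuous (fun y => px (py g) (X (fst y) (snd y)) (Y (fst y) (snd y))) _ => apply (cH (px (py g)) hc5)
 | |- continuous (fun y => py (py g) (X (fst y) (snd y)) (Y (fst y) (snd y))) _ => apply (cH (py (py g)) hc6)
 end.
Ltac cU := repeat first [catom | cstep0].

Lemma cU0 : continuous (fun q : R * R => U g a b c s (fst q) (snd q)) p.
Proof. unfold U; cU. Qed.
Lemma cUr : continuous (fun q : R * R => Ur g a b c s (fst q) (snd q)) p.
Proof. unfold Ur; cU. Qed.
Lemma cUrr : continuous (fun q : R * R => Urr g a b c s (fst q) (snd q)) p.
Proof. unfold Urr; cU. Qed.
Lemma cUt : continuous (fun q : R * R => Ut g a b c s (fst q) (snd q)) p.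
Proof. unfold Ut, Xt, Yt; cU. Qed.
Lemma cUtt : continuous (fun q : R * R => Utt g a b c s (fst q) (snd q)) p.
Proof. unfold Utt, Xtt, Ytt, Xt, Yt; cU. Qed.
End P.
End Cont.

End P6.
Import P6.

Module P7.
Open Scope R_scope.

Lemma isR_plus (f g : R -> R) a b v w : is_RInt f a b v -> is_RInt g a b w ->
  is_RInt (fun t => f t + g t) a b (v + w).
Proof. intros; apply (is_RInt_plus f g); auto. Qed.
Lemma isR_scal (f : R -> R) a b v k : is_RInt f a b v ->
  is_RInt (fun t => k * f t) a b (k * v).
Proof. intros; apply (is_RInt_scal f); auto. Qed.
Lemma isR_minus (f g : R -> R) a b v w : is_RInt f a b v -> is_RInt g a b w ->
  is_RInt (fun t => f t - g t) a b (v - w).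
Proof. intros; apply (is_RInt_minus f g); auto. Qed.
Lemma isR_uniq (f : R -> R) a b v w : is_RInt f a b v -> is_RInt f a b w -> v = w.
Proof. intros H1 H2. assert (E1 := @is_RInt_unique R_CompleteNormedModule f a b v H1).
  assert (E2 := @is_RInt_unique R_CompleteNormedModule f a b w H2). congruence. Qed.
Lemma isR_deriv (G dG : R -> R) a b : a <= b ->
  (forall t, a <= t <= b -> is_derive G t (dG t)) ->
  (forall t, a <= t <= b -> continuous dG t) -> is_RInt dG a b (G b - G a).
Proof.
  intros Hab H1 H2. apply (is_RInt_derive G dG).
  - intros t Ht; apply H1. rewrite Rmin_left, Rmax_right in Ht; auto.
  - intros t Ht; apply H2. rewrite Rmin_left, Rmax_right in Ht; auto.
Qed.

Ltac toR := match goal with |- @eq _ ?x ?y => change (@eq R x y) end.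

Lemma cR1_cos t : continuous cos t.
Proof. exact (continuous_cos_comp (fun t => t) _ (continuous_id _)). Qed.
Lemma cR1_sin t : continuous sin t.
Proof. exact (continuous_sin_comp (fun t => t) _ (continuous_id _)). Qed.

Lemma E1_per c s : E1 c s (- PI) = E1 c s PI.
Proof. unfold E1; rewrite cos_neg, sin_neg, sin_PI; ring. Qed.
Lemma E2_per c s : E2 c s (- PI) = E2 c s PI.
Proof. unfold E2; rewrite cos_neg, sin_neg, sin_PI; ring. Qed.

Lemma PI_le : - PI <= PI.
Proof. assert (H := PI_RGT_0); lra. Qed.

Section Int.
Variable g : R -> R -> R.
Hypothesis Hg : harmonic_real_on unit_disk g.
Variables a b c s : R.
Hypothesis Hab : a ^ 2 + b ^ 2 < 1.
Hypothesis Hcs : c ^ 2 + s ^ 2 = 1.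

Local Notation U := (U g a b c s).
Local Notation Ur := (Ur g a b c s).
Local Notation Urr := (Urr g a b c s).
Local Notation Ut := (Ut g a b c s).
Local Notation Utt := (Utt g a b c s).

Definition Phi r := RInt (fun t => U r t * cos t) (- PI) PI.
Definition dPhi r := RInt (fun t => Ur r t * cos t) (- PI) PI.
Definition ddPhi r := RInt (fun t => Urr r t * cos t) (- PI) PI.
Definition Mm r := RInt (fun t => U r t) (- PI) PI.
Definition dMm r := RInt (fun t => Ur r t) (- PI) PI.
Definition ddMm r := RInt (fun t => Urr r t) (- PI) PI.

Section Sl.
Variable r : R.
Hypothesis Hr : r ^ 2 < 1.
Lemma sU t : continuous (fun t => U r t) t.
Proof. apply (cont_slice U). apply (cU0 g Hg a b c s Hab Hcs (r, t)); exact Hr. Qed.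
Lemma sUr t : continuous (fun t => Ur r t) t.
Proof. apply (cont_slice Ur). apply (cUr g Hg a b c s Hab Hcs (r, t)); exact Hr. Qed.
Lemma sUrr t : continuous (fun t => Urr r t) t.
Proof. apply (cont_slice Urr). apply (cUrr g Hg a b c s Hab Hcs (r, t)); exact Hr. Qed.
Lemma sUt t : continuous (fun t => Ut r t) t.
Proof. apply (cont_slice Ut). apply (cUt g Hg a b c s Hab Hcs (r, t)); exact Hr. Qed.
Lemma sUtt t : continuous (fun t => Utt r t) t.
Proof. apply (cont_slice Utt). apply (cUtt g Hg a b c s Hab Hcs (r, t)); exact Hr. Qed.

Lemma exU : ex_RInt (fun t => U r t) (- PI) PI.
Proof. apply (ex_RInt_continuous (V:=R_CompleteNormedModule)); intros; apply sU. Qed.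
Lemma exUr : ex_RInt (fun t => Ur r t) (- PI) PI.
Proof. apply (ex_RInt_continuous (V:=R_CompleteNormedModule)); intros; apply sUr. Qed.
Lemma exUrr : ex_RInt (fun t => Urr r t) (- PI) PI.
Proof. apply (ex_RInt_continuous (V:=R_CompleteNormedModule)); intros; apply sUrr. Qed.
Lemma exUc : ex_RInt (fun t => U r t * cos t) (- PI) PI.
Proof. apply (ex_RInt_continuous (V:=R_CompleteNormedModule)); intros; apply cR_mult; [apply sU | apply cR1_cos]. Qed.
Lemma exUrc : ex_RInt (fun t => Ur r t * cos t) (- PI) PI.
Proof. apply (ex_RInt_continuous (V:=R_CompleteNormedModule)); intros; apply cR_mult; [apply sUr | apply cR1_cos]. Qed.
Lemma exUrrc : ex_RInt (fun t => Urr r t * cos t) (- PI) PI.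
Proof. apply (ex_RInt_continuous (V:=R_CompleteNormedModule)); intros; apply cR_mult; [apply sUrr | apply cR1_cos]. Qed.

Lemma ode_cos : r ^ 2 * ddPhi r + r * dPhi r - Phi r = 0.
Proof.
  assert (I1 := @RInt_correct R_CompleteNormedModule _ _ _ exUrrc).
  assert (I2 := @RInt_correct R_CompleteNormedModule _ _ _ exUrc).
  assert (I3 := @RInt_correct R_CompleteNormedModule _ _ _ exUc).
  assert (I := isR_minus _ _ _ _ _ _ (isR_plus _ _ _ _ _ _ (isR_scal _ _ _ _ (r ^ 2) I1) (isR_scal _ _ _ _ r I2)) I3).
  assert (J : is_RInt (fun t => (Utt r t + U r t) * cos t) (- PI) PI
     ((Ut r PI * cos PI + U r PI * sin PI) - (Ut r (- PI) * cos (- PI) + U r (- PI) * sin (- PI)))).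
  { apply (isR_deriv (fun t => Ut r t * cos t + U r t * sin t)); [apply PI_le | |].
    - intros t _. eapply is_derive_eq.
      + apply isd_plus; apply isd_mult.
        * apply (Ut_dt g Hg a b c s Hab Hcs r t Hr).
        * apply is_derive_cos.
        * apply (U_dt g Hg a b c s Hab Hcs r t Hr).
        * apply is_derive_sin.
      + toR; ring.
    - intros t _. apply cR_mult; [apply cR_plus; [apply sUtt | apply sU] | apply cR1_cos]. }
  assert (P0 : Ut r (- PI) = Ut r PI /\ U r (- PI) = U r PI).
  { unfold Ut, P5.U, Xt, Yt, P5.X, P5.Y, P5.Xr, P5.Yr. rewrite E1_per, E2_per. split; reflexivity. }
  destruct P0 as [P1 P2]. rewrite P1, P2, cos_neg, sin_neg in J.
  replace (Ut r PI * cos PI + U r PI * sin PI - (Ut r PI * cos PI + U r PI * - sin PI)) with (2 * U r PI * sin PI) in J by ring.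
  rewrite sin_PI, Rmult_0_r in J.
  apply (isR_scal _ _ _ _ (-1)) in J.
  eapply is_RInt_ext in J.
  - rewrite Rmult_0_r in J. unfold ddPhi, dPhi, Phi. exact (isR_uniq _ _ _ _ _ I J).
  - intros t _. simpl.
    assert (L := polar_lap g Hg a b c s Hab Hcs r t Hr). nra.
Qed.

Lemma ode_1 : r ^ 2 * ddMm r + r * dMm r = 0.
Proof.
  assert (I1 := @RInt_correct R_CompleteNormedModule _ _ _ exUrr).
  assert (I2 := @RInt_correct R_CompleteNormedModule _ _ _ exUr).
  assert (I := isR_plus _ _ _ _ _ _ (isR_scal _ _ _ _ (r ^ 2) I1) (isR_scal _ _ _ _ r I2)).
  assert (J : is_RInt (fun t => Utt r t) (- PI) PI (Ut r PI - Ut r (- PI))).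
  { apply (isR_deriv (fun t => Ut r t)); [apply PI_le | |].
    - intros t _. apply (Ut_dt g Hg a b c s Hab Hcs r t Hr).
    - intros t _. apply sUtt. }
  assert (P1 : Ut r (- PI) = Ut r PI).
  { unfold Ut, P5.U, Xt, Yt, P5.X, P5.Y, P5.Xr, P5.Yr. rewrite E1_per, E2_per. reflexivity. }
  rewrite P1, Rminus_eq_0 in J.
  apply (isR_scal _ _ _ _ (-1)) in J.
  eapply is_RInt_ext in J.
  - rewrite Rmult_0_r in J. unfold ddMm, dMm. exact (isR_uniq _ _ _ _ _ I J).
  - intros t _. simpl.
    assert (L := polar_lap g Hg a b c s Hab Hcs r t Hr). nra.
Qed.
End Sl.
End Int.

End P7.
Import P7.

Module P8.
Open Scope R_scope.

Lemma isd_plusR (f g : R -> R) x df dg : is_derive f x df -> is_derive g x dg ->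
  is_derive (fun t => f t + g t) x (df + dg).
Proof. intros; apply @is_derive_plus; auto. Qed.
Lemma isd_minusR (f g : R -> R) x df dg : is_derive f x df -> is_derive g x dg ->
  is_derive (fun t => f t - g t) x (df - dg).
Proof. intros; apply @is_derive_minus; auto. Qed.
Lemma isd_multR (f g : R -> R) x df dg : is_derive f x df -> is_derive g x dg ->
  is_derive (fun t => f t * g t) x (df * g x + f x * dg).
Proof. intros; apply @is_derive_mult; auto. intros; apply Rmult_comm. Qed.
Lemma isd_id x : is_derive (fun t : R => t) x 1.
Proof. apply (@is_derive_id R_AbsRing). Qed.
Ltac toR := match goal with |- @eq _ ?x ?y => change (@eq R x y) end; cbv beta.
Lemma isd_eqR (f : R -> R) x l l' : is_derive f x l -> l = l' -> is_derive f x l'.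
Proof. intros H ->; exact H. Qed.

Lemma mvt0 (q dq : R -> R) r : 0 < r -> r < 1 ->
  (forall y, y ^ 2 < 1 -> is_derive q y (dq y)) ->
  exists c, q r - q 0 = dq c * (r - 0) /\ 0 < c < r.
Proof.
  intros H0 H1 Hd. apply MVT_cor2; auto.
  intros c Hc. apply is_derive_Reals, Hd. nra.
Qed.

Lemma ode1_sol (M dM ddM : R -> R) :
  (forall r, r ^ 2 < 1 -> is_derive M r (dM r)) ->
  (forall r, r ^ 2 < 1 -> is_derive dM r (ddM r)) ->
  (forall r, r ^ 2 < 1 -> r ^ 2 * ddM r + r * dM r = 0) ->
  forall r, 0 <= r < 1 -> M r = M 0.
Proof.
  intros H1 H2 H3 r [Hr0 Hr1].
  destruct (Req_dec r 0) as [->|Hr]; auto.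
  assert (Hdm : forall y, 0 < y < 1 -> dM y = 0).
  { intros y [Hy0 Hy1].
    destruct (mvt0 (fun r => r * dM r) (fun r => dM r + r * ddM r) y Hy0 Hy1) as [c [E Hc]].
    - intros z Hz. eapply isd_eqR. apply isd_multR. apply isd_id. apply H2, Hz.
      toR; ring.
    - assert (Hc2 : c ^ 2 < 1) by nra. assert (Hq := H3 c Hc2).
      assert (dM c + c * ddM c = 0).
      { apply (Rmult_eq_reg_l c); [| lra]. rewrite Rmult_0_r. rewrite <- Hq. ring. }
      rewrite H, Rmult_0_l in E. assert (y * dM y = 0) by lra.
      apply (Rmult_eq_reg_l y); lra. }
  destruct (mvt0 M dM r ltac:(lra) Hr1 H1) as [c [E Hc]].
  rewrite Hdm in E by lra. lra.
Qed.

Lemma ode2_sol (P dP ddP : R -> R) :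
  (forall r, r ^ 2 < 1 -> is_derive P r (dP r)) ->
  (forall r, r ^ 2 < 1 -> is_derive dP r (ddP r)) ->
  (forall r, r ^ 2 < 1 -> r ^ 2 * ddP r + r * dP r - P r = 0) ->
  P 0 = 0 ->
  forall r, 0 < r < 1 -> P r = r * dP 0.
Proof.
  intros H1 H2 H3 HP0 r [Hr0 Hr1].
  assert (Hq : forall y, 0 < y < 1 -> y * dP y = P y).
  { intros y [Hy0 Hy1].
    destruct (mvt0 (fun r => r ^ 2 * dP r - r * P r) (fun r => r ^ 2 * ddP r + r * dP r - P r) y Hy0 Hy1) as [c [E Hc]].
    - intros z Hz. eapply isd_eqR.
      apply isd_minusR; apply isd_multR.
      + auto_derive; auto.
      + apply H2, Hz.
      + apply isd_id.
      + apply H1, Hz.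
      + toR; ring.
    - rewrite H3 in E by nra. rewrite HP0 in E.
      assert (y * (y * dP y - P y) = 0) by nra.
      apply Rmult_integral in H. destruct H; lra. }
  assert (Hh : forall y z, 0 < y -> y <= z -> z < 1 -> P y / y = P z / z).
  { intros y z Hy Hyz Hz. destruct (Req_dec y z) as [->|Hne]; auto.
    destruct (MVT_cor2 (fun r => P r / r) (fun r => (dP r * r - P r) / r ^ 2) y z ltac:(lra)) as [c [E Hc]].
    - intros c Hc. apply is_derive_Reals. eapply isd_eqR.
      + auto_derive. split; [eexists; apply H1; nra | lra]. reflexivity.
      + replace (Derive (fun x => P x) c) with (dP c) by (symmetry; apply is_derive_unique, H1; nra).
        toR; field. lra.
    - replace (dP c * c) with (c * dP c) in E by ring. rewrite Hq in E by lra. replace ((P c - P c) / c ^ 2) with 0 in E by (field; lra). lra. }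
  apply (Rmult_eq_reg_r (/ r)); [| apply Rinv_neq_0_compat; lra].
  replace (r * dP 0 * / r) with (dP 0) by (field; lra).
  change (P r * / r) with (P r / r).
  destruct (Req_dec (P r / r) (dP 0)) as [E|Hne]; auto. exfalso.
  assert (Heps : 0 < Rabs (P r / r - dP 0)) by (apply Rabs_pos_lt; lra).
  assert (D := proj1 (is_derive_Reals P 0 (dP 0)) (H1 0 ltac:(nra))).
  destruct (D _ Heps) as [d Hd].
  assert (Hdp := cond_pos d).
  set (h := Rmin (d / 2) r).
  assert (Hh0 : 0 < h) by (unfold h; apply Rmin_pos; lra).
  assert (Hh1 : h <= r) by (unfold h; apply Rmin_r).
  assert (Hh2 : h <= d / 2) by (unfold h; apply Rmin_l).
  assert (K := Hd h ltac:(lra) ltac:(rewrite Rabs_pos_eq; lra)).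
  rewrite Rplus_0_l, HP0, Rminus_0_r in K.
  rewrite (Hh h r) in K by lra. lra.
Qed.

End P8.
Import P8.

Module P9.
Open Scope R_scope.

Lemma cos_abs t : cos (Rabs t) = cos t.
Proof. unfold Rabs; destruct Rcase_abs; [apply cos_neg | reflexivity]. Qed.

Lemma cos_ge_abs t x : 0 <= x <= PI -> Rabs t <= x -> cos x <= cos t.
Proof.
  intros Hx Ht. rewrite <- (cos_abs t).
  destruct (Req_dec (Rabs t) x) as [->|Hne]; [lra|].
  left. apply cos_decreasing_1; try lra. apply Rabs_pos.
Qed.
Lemma cos_le_abs t x : 0 <= x -> x <= Rabs t <= PI -> cos t <= cos x.
Proof.
  intros Hx Ht. rewrite <- (cos_abs t).
  destruct (Req_dec (Rabs t) x) as [->|Hne]; [lra|].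
  left. apply cos_decreasing_1; try lra.
Qed.

Lemma isR_Chasles (f : R -> R) a b c v w : is_RInt f a b v -> is_RInt f b c w -> is_RInt f a c (v + w).
Proof. intros; apply (is_RInt_Chasles f a b c v w); auto. Qed.

Lemma exR (f : R -> R) a b : (forall t, continuous f t) -> ex_RInt f a b.
Proof. intros H; apply (ex_RInt_continuous (V:=R_CompleteNormedModule)); intros; apply H. Qed.

Lemma RInt_leR (f g : R -> R) a b : a <= b -> (forall t, continuous f t) -> (forall t, continuous g t) ->
  (forall t, a < t < b -> f t <= g t) -> RInt f a b <= RInt g a b.
Proof. intros; apply RInt_le; auto; apply exR; auto. Qed.

Lemma isR_of (f : R -> R) a b : (forall t, continuous f t) -> is_RInt f a b (RInt f a b).
Proof. intros H; apply (@RInt_correct R_CompleteNormedModule), exR, H. Qed.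

Lemma int_cos_k k a b : is_RInt (fun t => cos t - k) a b ((sin b - k * b) - (sin a - k * a)).
Proof.
  apply (is_RInt_derive (fun t => sin t - k * t)).
  - intros t _. eapply isd_eqR. auto_derive; auto. toR; ring.
  - intros t _. apply cR_minus. apply cR1_cos. apply cR_const.
Qed.
Lemma int_k_cos k a b : is_RInt (fun t => k - cos t) a b ((k * b - sin b) - (k * a - sin a)).
Proof.
  apply (is_RInt_derive (fun t => k * t - sin t)).
  - intros t _. eapply isd_eqR. auto_derive; auto. toR; ring.
  - intros t _. apply cR_minus. apply cR_const. apply cR1_cos.
Qed.

Lemma bathtub (V : R -> R) m :
  (forall t, continuous V t) -> (forall t, - 1 <= V t <= 1) ->
  is_RInt V (- PI) PI (2 * PI * m) -> - 1 < m < 1 ->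
  RInt (fun t => V t * cos t) (- PI) PI <= 4 * cos (PI * m / 2).
Proof.
  intros HC HB HI Hm.
  assert (HPI := PI_RGT_0).
  set (al := PI * (1 + m) / 2).
  assert (Hal : 0 < al < PI) by (unfold al; split; nra).
  set (k := cos al).
  assert (CV : forall t, continuous (fun t => V t * cos t) t) by (intros; apply cR_mult; [apply HC | apply cR1_cos]).
  assert (CkV : forall t, continuous (fun t => k * V t) t) by (intros; apply cR_mult; [apply cR_const | apply HC]).
  assert (S : RInt (fun t => V t * cos t) (- PI) PI =
     RInt (fun t => V t * cos t) (- PI) (- al) + RInt (fun t => V t * cos t) (- al) al + RInt (fun t => V t * cos t) al PI).
  { apply (isR_uniq (fun t => V t * cos t) (- PI) PI). apply isR_of; auto.
    apply isR_Chasles with al; [apply isR_Chasles with (- al)|]; apply isR_of; auto. }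
  assert (SV : 2 * PI * m = RInt V (- PI) (- al) + RInt V (- al) al + RInt V al PI).
  { apply (isR_uniq V (- PI) PI); auto.
    apply isR_Chasles with al; [apply isR_Chasles with (- al)|]; apply isR_of; auto. }
  assert (B1 : RInt (fun t => V t * cos t) (- PI) (- al) <= k * RInt V (- PI) (- al) + ((k * (- al) - sin (- al)) - (k * (- PI) - sin (- PI)))).
  { eapply Rle_trans. apply (RInt_leR _ (fun t => k * V t + (k - cos t))); [lra | auto | |].
    - intros; apply cR_plus; [apply CkV | apply cR_minus; [apply cR_const | apply cR1_cos]].
    - intros t Ht. assert (cos t <= k) by (apply cos_le_abs; [lra | rewrite Rabs_left; lra]).
      specialize (HB t). nra.
    - right. apply (isR_uniq (fun t => k * V t + (k - cos t)) (- PI) (- al)).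
      apply isR_of. intros; apply cR_plus; [apply CkV | apply cR_minus; [apply cR_const | apply cR1_cos]].
      apply isR_plus. apply isR_scal, isR_of, HC. apply int_k_cos. }
  assert (B2 : RInt (fun t => V t * cos t) (- al) al <= k * RInt V (- al) al + ((sin al - k * al) - (sin (- al) - k * (- al)))).
  { eapply Rle_trans. apply (RInt_leR _ (fun t => k * V t + (cos t - k))); [lra | auto | |].
    - intros; apply cR_plus; [apply CkV | apply cR_minus; [apply cR1_cos | apply cR_const]].
    - intros t Ht. assert (k <= cos t) by (apply cos_ge_abs; [lra | apply Rabs_le; lra]).
      specialize (HB t). nra.
    - right. apply (isR_uniq (fun t => k * V t + (cos t - k)) (- al) al).
      apply isR_of. intros; apply cR_plus; [apply CkV | apply cR_minus; [apply cR1_cos | apply cR_const]].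
      apply isR_plus. apply isR_scal, isR_of, HC. apply int_cos_k. }
  assert (B3 : RInt (fun t => V t * cos t) al PI <= k * RInt V al PI + ((k * PI - sin PI) - (k * al - sin al))).
  { eapply Rle_trans. apply (RInt_leR _ (fun t => k * V t + (k - cos t))); [lra | auto | |].
    - intros; apply cR_plus; [apply CkV | apply cR_minus; [apply cR_const | apply cR1_cos]].
    - intros t Ht. assert (cos t <= k) by (apply cos_le_abs; [lra | rewrite Rabs_right; lra]).
      specialize (HB t). nra.
    - right. apply (isR_uniq (fun t => k * V t + (k - cos t)) al PI).
      apply isR_of. intros; apply cR_plus; [apply CkV | apply cR_minus; [apply cR_const | apply cR1_cos]].
      apply isR_plus. apply isR_scal, isR_of, HC. apply int_k_cos. }
  rewrite S. rewrite sin_neg, sin_PI in *.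
  assert (E : 4 * cos (PI * m / 2) = 4 * sin al).
  { rewrite cos_sin. unfold al. f_equal. f_equal. field. }
  rewrite E.
  assert (k * (RInt V (- PI) (- al) + RInt V (- al) al + RInt V al PI) = k * (2 * PI * m)) by (rewrite SV; ring).
  assert (Hs : sin (- PI) = 0) by (rewrite sin_neg, sin_PI; ring). rewrite Hs in B1.
  assert (Hk : k * al * 2 = k * PI + k * PI * m) by (unfold al; field).
  lra.
Qed.

End P9.
Import P9.

Module P10.
Open Scope R_scope.

Lemma int_cos2 : is_RInt (fun t => cos t * cos t) (- PI) PI PI.
Proof.
  replace PI with ((PI + sin PI * cos PI) / 2 - (- PI + sin (- PI) * cos (- PI)) / 2) at 3
    by (rewrite sin_neg, cos_neg, sin_PI; field).
  apply (is_RInt_derive (fun t => (t + sin t * cos t) / 2)).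
  - intros t _. eapply isd_eqR. auto_derive; auto.
    assert (H := sin2_cos2 t). unfold Rsqr in H. toR. nra.
  - intros t _. apply cR_mult; apply cR1_cos.
Qed.
Lemma int_sincos : is_RInt (fun t => sin t * cos t) (- PI) PI 0.
Proof.
  replace 0 with (sin PI * sin PI / 2 - sin (- PI) * sin (- PI) / 2)
    by (rewrite sin_neg, sin_PI; field).
  apply (is_RInt_derive (fun t => sin t * sin t / 2)).
  - intros t _. eapply isd_eqR. auto_derive; auto. toR; field.
  - intros t _. apply cR_mult; [apply cR1_sin | apply cR1_cos].
Qed.
Lemma int_cos : is_RInt (fun t => cos t) (- PI) PI 0.
Proof.
  replace 0 with (sin PI - sin (- PI)) by (rewrite sin_neg, sin_PI; field).
  apply (is_RInt_derive sin).
  - intros t _. apply is_derive_sin.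
  - intros t _. apply cR1_cos.
Qed.

Lemma isd_const (k x : R) : is_derive (fun _ : R => k) x 0.
Proof. apply (@is_derive_const R_AbsRing). Qed.

Section Grad.
Variable g : R -> R -> R.
Hypothesis Hg : harmonic_real_on unit_disk g.
Variables a b c s : R.
Hypothesis Hab : a ^ 2 + b ^ 2 < 1.
Hypothesis Hcs : c ^ 2 + s ^ 2 = 1.

Local Notation U := (U g a b c s).
Local Notation Ur := (Ur g a b c s).
Local Notation Urr := (Urr g a b c s).
Local Notation Phi := (Phi g a b c s).
Local Notation dPhi := (dPhi g a b c s).
Local Notation ddPhi := (ddPhi g a b c s).
Local Notation Mm := (Mm g a b c s).
Local Notation dMm := (dMm g a b c s).
Local Notation ddMm := (ddMm g a b c s).

Lemma cqcos (F : R -> R -> R) x t : continuous (fun q : R * R => F (fst q) (snd q)) (x, t) ->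
  continuous (fun q : R * R => F (fst q) (snd q) * cos (snd q)) (x, t).
Proof. intros H; apply cR_mult; [exact H | apply cR_cos, c2_snd]. Qed.

Lemma Phi_d r : r ^ 2 < 1 -> is_derive Phi r (dPhi r).
Proof.
  intros Hr. apply (param_deriv (fun r t => U r t * cos t) (fun r t => Ur r t * cos t)); auto.
  - intros y t Hy. eapply isd_eqR. apply isd_multR. apply (U_dr g Hg a b c s Hab Hcs y t Hy).
    apply isd_const. toR; ring.
  - intros t. apply cqcos. apply (cUr g Hg a b c s Hab Hcs (r, t)); exact Hr.
  - intros y Hy. apply (exUc g Hg a b c s Hab Hcs y Hy).
Qed.
Lemma dPhi_d r : r ^ 2 < 1 -> is_derive dPhi r (ddPhi r).
Proof.
  intros Hr. apply (param_deriv (fun r t => Ur r t * cos t) (fun r t => Urr r t * cos t)); auto.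
  - intros y t Hy. eapply isd_eqR. apply isd_multR. apply (Ur_dr g Hg a b c s Hab Hcs y t Hy).
    apply isd_const. toR; ring.
  - intros t. apply cqcos. apply (cUrr g Hg a b c s Hab Hcs (r, t)); exact Hr.
  - intros y Hy. apply (exUrc g Hg a b c s Hab Hcs y Hy).
Qed.
Lemma Mm_d r : r ^ 2 < 1 -> is_derive Mm r (dMm r).
Proof.
  intros Hr. apply (param_deriv (fun r t => U r t) (fun r t => Ur r t)); auto.
  - intros y t Hy. apply (U_dr g Hg a b c s Hab Hcs y t Hy).
  - intros t. apply (cUr g Hg a b c s Hab Hcs (r, t)); exact Hr.
  - intros y Hy. apply (exU g Hg a b c s Hab Hcs y Hy).
Qed.
Lemma dMm_d r : r ^ 2 < 1 -> is_derive dMm r (ddMm r).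
Proof.
  intros Hr. apply (param_deriv (fun r t => Ur r t) (fun r t => Urr r t)); auto.
  - intros y t Hy. apply (Ur_dr g Hg a b c s Hab Hcs y t Hy).
  - intros t. apply (cUrr g Hg a b c s Hab Hcs (r, t)); exact Hr.
  - intros y Hy. apply (exUr g Hg a b c s Hab Hcs y Hy).
Qed.

Lemma U0 t : U 0 t = g a b.
Proof. unfold P5.U, P5.X, P5.Y. destruct (at0 a b (E1 c s t) (E2 c s t)) as [A [B _]]. rewrite A, B. reflexivity. Qed.
Lemma Ur0 t : Ur 0 t = px g a b * (kk a b * E1 c s t) + py g a b * (kk a b * E2 c s t).
Proof. unfold P5.Ur, P5.X, P5.Y, P5.Xr, P5.Yr. destruct (at0 a b (E1 c s t) (E2 c s t)) as [A [B [C D]]].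
  rewrite A, B, C, D. reflexivity. Qed.

Lemma Phi0 : Phi 0 = 0.
Proof.
  unfold P7.Phi. apply (isR_uniq (fun t => U 0 t * cos t) (- PI) PI).
  - apply (@RInt_correct R_CompleteNormedModule), (exUc g Hg a b c s Hab Hcs 0). nra.
  - assert (J := isR_scal _ _ _ _ (g a b) int_cos). rewrite Rmult_0_r in J.
    eapply is_RInt_ext; [| exact J].
    intros t _. cbv beta. rewrite U0. toR; ring.
Qed.
Lemma Mm0 : Mm 0 = 2 * PI * g a b.
Proof.
  unfold P7.Mm. apply (isR_uniq (fun t => U 0 t) (- PI) PI).
  - apply (@RInt_correct R_CompleteNormedModule), (exU g Hg a b c s Hab Hcs 0). nra.
  - replace (2 * PI * g a b) with (scal (PI - - PI) (g a b)) by (unfold scal; simpl; unfold mult; simpl; ring).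
    eapply is_RInt_ext; [| apply (is_RInt_const (V:=R_NormedModule) (- PI) PI (g a b))].
    intros t _. cbv beta. rewrite U0. reflexivity.
Qed.

Lemma dPhi0 : dPhi 0 = kk a b * PI * (px g a b * c + py g a b * s).
Proof.
  unfold P7.dPhi. apply (isR_uniq (fun t => Ur 0 t * cos t) (- PI) PI).
  - apply (@RInt_correct R_CompleteNormedModule), (exUrc g Hg a b c s Hab Hcs 0). nra.
  - assert (J := isR_plus _ _ _ _ _ _
       (isR_scal _ _ _ _ (kk a b * (px g a b * c + py g a b * s)) int_cos2)
       (isR_scal _ _ _ _ (kk a b * (py g a b * c - px g a b * s)) int_sincos)).
    replace (kk a b * PI * (px g a b * c + py g a b * s)) with
      (kk a b * (px g a b * c + py g a b * s) * PI + kk a b * (py g a b * c - px g a b * s) * 0) by ring.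
    eapply is_RInt_ext; [| exact J].
    intros t _. cbv beta. rewrite Ur0. unfold E1, E2. toR; ring.
Qed.

Lemma lim_r1 (D C : R) : (forall r, 0 < r < 1 -> r * D <= C) -> D <= C.
Proof.
  intros H. destruct (Rle_or_lt D C) as [|Hlt]; auto. exfalso.
  set (d := Rmin (1/2) ((D - C) / (2 * (Rabs D + 1)))).
  assert (HA := Rabs_pos D).
  assert (Hd0 : 0 < d) by (unfold d; apply Rmin_pos; [lra | apply Rdiv_lt_0_compat; lra]).
  assert (Hd1 : d <= 1/2) by (unfold d; apply Rmin_l).
  assert (Hd2 : d * (2 * (Rabs D + 1)) <= D - C).
  { assert (d <= (D - C) / (2 * (Rabs D + 1))) by (unfold d; apply Rmin_r).
    apply (Rmult_le_compat_r (2 * (Rabs D + 1))) in H0; [| lra].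
    unfold Rdiv in H0. rewrite Rmult_assoc, Rinv_l, Rmult_1_r in H0 by lra. exact H0. }
  assert (K := H (1 - d) ltac:(lra)).
  assert (d * D <= d * Rabs D) by (apply Rmult_le_compat_l; [lra | apply Rle_abs]).
  nra.
Qed.

Lemma grad_dir : (forall x y, Dk x y -> - 1 < g x y < 1) ->
  kk a b * PI * (px g a b * c + py g a b * s) <= 4 * cos (PI * g a b / 2).
Proof.
  intros Hrange. rewrite <- dPhi0.
  apply lim_r1. intros r Hr.
  assert (Hr2 : r ^ 2 < 1) by nra.
  rewrite <- (ode2_sol Phi dPhi ddPhi Phi_d dPhi_d (ode_cos g Hg a b c s Hab Hcs) Phi0 r Hr).
  apply bathtub.
  - apply (sU g Hg a b c s Hab Hcs r Hr2).
  - intros t. unfold P5.U. destruct (Hrange _ _ (XYD a b c s Hab Hcs r t Hr2)); lra.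
  - replace (2 * PI * g a b) with (Mm r).
    + apply (@RInt_correct R_CompleteNormedModule), (exU g Hg a b c s Hab Hcs r Hr2).
    + rewrite (ode1_sol Mm dMm ddMm Mm_d dMm_d (ode_1 g Hg a b c s Hab Hcs) r ltac:(lra)). apply Mm0.
  - apply Hrange. unfold Dk. nra.
Qed.
End Grad.

End P10.
Import P10.

Module P11.
Open Scope R_scope.

Lemma cos_half_pos m : - 1 < m < 1 -> 0 < cos (PI * m / 2).
Proof. intros H. assert (HP := PI_RGT_0). apply cos_gt_0; nra. Qed.

Lemma grad_bound (g : R -> R -> R) (Hg : harmonic_real_on unit_disk g)
  (Hrange : forall x y, Dk x y -> - 1 < g x y < 1) a b :
  a ^ 2 + b ^ 2 < 1 ->
  (1 - a ^ 2 - b ^ 2) * PI * sqrt (px g a b ^ 2 + py g a b ^ 2) <= 4 * cos (PI * g a b / 2).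
Proof.
  intros Hab.
  set (ux := px g a b). set (uy := py g a b).
  assert (Hq : 0 <= ux ^ 2 + uy ^ 2) by (assert (0 <= ux^2) by apply pow2_ge_0; assert (0 <= uy^2) by apply pow2_ge_0; lra).
  assert (Hc := cos_half_pos (g a b) (Hrange a b ltac:(unfold Dk; nra))).
  destruct (Req_dec (ux ^ 2 + uy ^ 2) 0) as [E|Hne].
  - rewrite E, sqrt_0. lra.
  - set (n := sqrt (ux ^ 2 + uy ^ 2)).
    assert (Hn : 0 < n) by (apply sqrt_lt_R0; lra).
    assert (Hn2 : n * n = ux ^ 2 + uy ^ 2) by (apply sqrt_sqrt; lra).
    assert (Hcs : (ux / n) ^ 2 + (uy / n) ^ 2 = 1).
    { replace ((ux / n) ^ 2 + (uy / n) ^ 2) with ((ux ^ 2 + uy ^ 2) / (n * n)) by (field; lra).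
      rewrite Hn2. field. lra. }
    assert (G := grad_dir g Hg a b (ux / n) (uy / n) Hab Hcs Hrange).
    fold ux uy in G.
    replace (ux * (ux / n) + uy * (uy / n)) with n in G.
    + unfold kk in G. exact G.
    + replace (ux * (ux / n) + uy * (uy / n)) with ((ux ^ 2 + uy ^ 2) / n) by (field; lra).
      rewrite <- Hn2. field. lra.
Qed.

Lemma Cmod_xy x y : Cmod (x, y) ^ 2 = x * x + y * y.
Proof. unfold Cmod; cbn [fst snd]. rewrite pow2_sqrt. ring.
  assert (0 <= x^2) by apply pow2_ge_0; assert (0 <= y^2) by apply pow2_ge_0; lra. Qed.

Lemma fz_decomp (f : C -> C) z :
  f_z f z = Cplus (px (ReF f) (fst z) (snd z), - py (ReF f) (fst z) (snd z)) (Copp (Cconj (f_zbar f z))).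
Proof. unfold f_z, f_zbar, Cplus, Copp, Cconj. cbn [fst snd]. apply injective_projections; cbn [fst snd]; field. Qed.

Lemma PK K f : 1 <= K -> HQR K unit_disk strip f -> forall x y, Dk x y ->
  rho_S (f (x, y)) * (Cmod (f_z f (x, y)) + Cmod (f_zbar f (x, y))) <= K * rho_U (x, y).
Proof.
  intros HK [Hmap [[Hu Hv] Hq]] x y Hxy.
  assert (Hrange : forall x y, Dk x y -> - 1 < ReF f x y < 1).
  { intros x' y' H'. apply (Hmap (x', y')). apply unit_disk_Dk, H'. }
  assert (G := grad_bound (ReF f) Hu Hrange x y ltac:(unfold Dk in Hxy; nra)).
  destruct (Hq (x, y) ltac:(apply unit_disk_Dk, Hxy)) as [HAB HK'].
  set (A := Cmod (f_z f (x, y))) in *. set (B := Cmod (f_zbar f (x, y))) in *.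
  set (n := sqrt (px (ReF f) x y ^ 2 + py (ReF f) x y ^ 2)) in *.
  assert (HAn : A <= n + B).
  { unfold A. rewrite fz_decomp. eapply Rle_trans; [apply Cmod_triangle|].
    rewrite Cmod_opp, Cmod_conj. cbn [fst snd]. unfold Cmod at 1; cbn [fst snd].
    replace ((- py (ReF f) x y) ^ 2) with (py (ReF f) x y ^ 2) by ring. fold n. fold B. lra. }
  assert (HB0 : 0 <= B) by apply Cmod_ge_0.
  assert (HABK : A + B <= K * (A - B)).
  { apply (Rmult_le_compat_r (A - B)) in HK'; [| lra].
    unfold Rdiv in HK'. rewrite Rmult_assoc, Rinv_l, Rmult_1_r in HK' by lra. exact HK'. }
  assert (HKn : A + B <= K * n) by nra.
  set (u := ReF f x y) in *.
  assert (Hu1 : - 1 < u < 1) by (apply Hrange, Hxy).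
  assert (Hcv := cos_half_pos u Hu1).
  unfold rho_S, rho_U. replace (fst (f (x, y))) with u by reflexivity.
  rewrite Cmod_xy.
  assert (Hk : 0 < 1 - (x * x + y * y)) by (unfold Dk in Hxy; lra).
  replace (PI / 2 * u) with (PI * u / 2) by field.
  set (cv := cos (PI * u / 2)) in *.
  replace (1 - x ^ 2 - y ^ 2) with (1 - (x * x + y * y)) in G by ring.
  set (kq := 1 - (x * x + y * y)) in *.
  assert (HP := PI_RGT_0).
  assert (Hn : n <= 4 * cv / (kq * PI)).
  { apply (Rmult_le_reg_r (kq * PI)). nra. unfold Rdiv. rewrite Rmult_assoc, Rinv_l, Rmult_1_r by nra. nra. }
  apply Rle_trans with (PI / 2 / cv * (K * (4 * cv / (kq * PI)))).
  - apply Rmult_le_compat_l. apply Rdiv_le_0_compat; lra.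
    eapply Rle_trans; [exact HKn|]. apply Rmult_le_compat_l; lra.
  - right. field. nra.
Qed.

End P11.
Import P11.

Module P12.
Open Scope R_scope.

Definition sig (t : R) := t ^ 2 * (3 - 2 * t).
Definition dsig (t : R) := 6 * t * (1 - t).

Lemma sig_range t : - 1 / 2 <= t <= 3 / 2 -> 0 <= sig t <= 1.
Proof.
  intros H. unfold sig. split.
  - apply Rmult_le_pos; [apply pow2_ge_0 | lra].
  - assert (0 <= (1 - t) ^ 2 * (1 + 2 * t)) by (apply Rmult_le_pos; [apply pow2_ge_0 | lra]).
    nra.
Qed.
Lemma sig_d t : is_derive sig t (dsig t).
Proof. unfold sig, dsig. eapply isd_eqR. auto_derive; auto. toR; ring. Qed.
Lemma sig0 : sig 0 = 0. Proof. unfold sig; ring. Qed.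
Lemma sig1 : sig 1 = 1. Proof. unfold sig; ring. Qed.
Lemma c_sig t : continuous sig t.
Proof. apply (ex_derive_continuous (K:=R_AbsRing) (V:=R_NormedModule)). eexists; apply sig_d. Qed.
Lemma c_dsig t : continuous dsig t.
Proof. unfold dsig. apply cR_mult; [apply cR_mult; [apply cR_const| apply continuous_id] | apply cR_minus; [apply cR_const| apply continuous_id]]. Qed.

Lemma loc_O t : 0 <= t <= 1 -> locally t (fun s => - 1 / 2 < s < 3 / 2).
Proof. intros H. apply (locally_interval _ t (- 1 / 2) (3 / 2)); simpl; try lra. auto. Qed.

Lemma ReF_eq (f : C -> C) z : ReF f (fst z) (snd z) = fst (f z).
Proof. unfold ReF; rewrite <- surjective_pairing; reflexivity. Qed.
Lemma ImF_eq (f : C -> C) z : ImF f (fst z) (snd z) = snd (f z).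
Proof. unfold ImF; rewrite <- surjective_pairing; reflexivity. Qed.

Lemma isd_comp (f g : R -> R) x df dg : is_derive f (g x) df -> is_derive g x dg ->
  is_derive (fun t => f (g t)) x (df * dg).
Proof. intros H1 H2. eapply isd_eqR. apply (is_derive_comp f g x df dg H1 H2). apply Rmult_comm. Qed.

Section Curve.
Variables (K : R) (f : C -> C).
Hypothesis HK : 1 <= K.
Hypothesis Hf : HQR K unit_disk strip f.
Variables (gam : R -> C) (z1 z2 : C).
Hypothesis Hgam : C1_curve unit_disk gam z1 z2.

Definition P1 t := fst (gam (sig t)).
Definition P2 t := snd (gam (sig t)).
Definition W1 t := Derive (fun r => fst (gam r)) (sig t) * dsig t.
Definition W2 t := Derive (fun r => snd (gam r)) (sig t) * dsig t.
Definition dl1 t := px (ReF f) (P1 t) (P2 t) * W1 t + py (ReF f) (P1 t) (P2 t) * W2 t.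
Definition dl2 t := px (ImF f) (P1 t) (P2 t) * W1 t + py (ImF f) (P1 t) (P2 t) * W2 t.
Definition del t := f (gam (sig t)).

Lemma Hu : harmonic_real_on unit_disk (ReF f).
Proof. destruct Hf as [_ [[A _] _]]; exact A. Qed.
Lemma Hv : harmonic_real_on unit_disk (ImF f).
Proof. destruct Hf as [_ [[_ A] _]]; exact A. Qed.

Section AtT.
Variable t : R.
Hypothesis Ht : - 1 / 2 < t < 3 / 2.
Lemma sr : 0 <= sig t <= 1.
Proof. apply sig_range; lra. Qed.
Lemma PD : Dk (P1 t) (P2 t).
Proof. apply unit_disk_Dk. unfold P1, P2. rewrite <- surjective_pairing.
  destruct Hgam as [_ [_ [A _]]]. apply A, sr. Qed.
Lemma gd1 : is_derive P1 t (W1 t).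
Proof. unfold P1, W1. apply (isd_comp (fun r => fst (gam r)) sig).
  - destruct Hgam as [_ [_ [_ A]]]. destruct (A _ sr) as [B _]. apply Derive_correct, B.
  - apply sig_d. Qed.
Lemma gd2 : is_derive P2 t (W2 t).
Proof. unfold P2, W2. apply (isd_comp (fun r => snd (gam r)) sig).
  - destruct Hgam as [_ [_ [_ A]]]. destruct (A _ sr) as [_ [B _]]. apply Derive_correct, B.
  - apply sig_d. Qed.
Lemma del1_d : is_derive (fun t => fst (del t)) t (dl1 t).
Proof.
  eapply is_derive_ext; [| apply (chain2 (ReF f) P1 P2)].
  - intros s; simpl. unfold P1, P2, del. apply ReF_eq.
  - apply h_diff. apply Hu. apply PD.
  - apply gd1.
  - apply gd2.
Qed.
Lemma del2_d : is_derive (fun t => snd (del t)) t (dl2 t).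
Proof.
  eapply is_derive_ext; [| apply (chain2 (ImF f) P1 P2)].
  - intros s; simpl. unfold P1, P2, del. apply ImF_eq.
  - apply h_diff. apply Hv. apply PD.
  - apply gd1.
  - apply gd2.
Qed.
End AtT.

Lemma cP1 t : - 1 / 2 < t < 3 / 2 -> continuous P1 t.
Proof. intros H. apply (ex_derive_continuous (K:=R_AbsRing) (V:=R_NormedModule)). eexists; apply gd1, H. Qed.
Lemma cP2 t : - 1 / 2 < t < 3 / 2 -> continuous P2 t.
Proof. intros H. apply (ex_derive_continuous (K:=R_AbsRing) (V:=R_NormedModule)). eexists; apply gd2, H. Qed.
Lemma cW1 t : - 1 / 2 < t < 3 / 2 -> continuous W1 t.
Proof. intros H. unfold W1. apply cR_mult; [| apply c_dsig].
  apply (continuous_comp sig (Derive (fun r => fst (gam r)))). apply c_sig.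
  destruct Hgam as [_ [_ [_ A]]]. destruct (A _ (sr t H)) as [_ [_ [B _]]]. exact B. Qed.
Lemma cW2 t : - 1 / 2 < t < 3 / 2 -> continuous W2 t.
Proof. intros H. unfold W2. apply cR_mult; [| apply c_dsig].
  apply (continuous_comp sig (Derive (fun r => snd (gam r)))). apply c_sig.
  destruct Hgam as [_ [_ [_ A]]]. destruct (A _ (sr t H)) as [_ [_ [_ B]]]. exact B. Qed.

Lemma cPh (h : R -> R -> R) t : - 1 / 2 < t < 3 / 2 ->
  (forall x y, Dk x y -> continuous (fun q : R * R => h (fst q) (snd q)) (x, y)) ->
  continuous (fun t => h (P1 t) (P2 t)) t.
Proof. intros H Hh. apply (continuous_comp_2 P1 P2 h). apply cP1, H. apply cP2, H. apply Hh, PD, H. Qed.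

Lemma cdl1 t : - 1 / 2 < t < 3 / 2 -> continuous dl1 t.
Proof. intros H. unfold dl1. apply cR_plus; apply cR_mult.
  apply cPh; auto; apply hc1, Hu. apply cW1, H. apply cPh; auto; apply hc2, Hu. apply cW2, H. Qed.
Lemma cdl2 t : - 1 / 2 < t < 3 / 2 -> continuous dl2 t.
Proof. intros H. unfold dl2. apply cR_plus; apply cR_mult.
  apply cPh; auto; apply hc1, Hv. apply cW1, H. apply cPh; auto; apply hc2, Hv. apply cW2, H. Qed.
End Curve.

End P12.
Import P12.

Module P13.
Open Scope R_scope.

Lemma cR_sqrt {U : UniformSpace} (f : U -> R) x : continuous f x -> continuous (fun y => sqrt (f y)) x.
Proof. intros H. apply (continuous_comp f sqrt); auto. exact (continuous_sqrt_comp (fun t => t) _ (continuous_id _)). Qed.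

Lemma Cmod_cd (g : R -> C) t : Cmod (curve_deriv g t) =
  sqrt (Derive (fun r => fst (g r)) t ^ 2 + Derive (fun r => snd (g r)) t ^ 2).
Proof. reflexivity. Qed.

Section Curve2.
Variables (K : R) (f : C -> C).
Hypothesis HK : 1 <= K.
Hypothesis Hf : HQR K unit_disk strip f.
Variables (gam : R -> C) (z1 z2 : C).
Hypothesis Hgam : C1_curve unit_disk gam z1 z2.

Local Notation del := (del f gam).
Local Notation dl1 := (dl1 f gam).
Local Notation dl2 := (dl2 f gam).

Lemma Dd1 t : - 1 / 2 < t < 3 / 2 -> Derive (fun r => fst (del r)) t = dl1 t.
Proof. intros H; apply is_derive_unique, (del1_d K f Hf gam z1 z2 Hgam t H). Qed.
Lemma Dd2 t : - 1 / 2 < t < 3 / 2 -> Derive (fun r => snd (del r)) t = dl2 t.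
Proof. intros H; apply is_derive_unique, (del2_d K f Hf gam z1 z2 Hgam t H). Qed.

Lemma cDd1 t : 0 <= t <= 1 -> continuous (fun s => Derive (fun r => fst (del r)) s) t.
Proof.
  intros H. apply (continuous_ext_loc _ dl1); [| apply (cdl1 K f Hf gam z1 z2 Hgam); lra].
  eapply filter_imp; [| apply loc_O, H]. intros y Hy. cbv beta. symmetry; apply Dd1, Hy.
Qed.
Lemma cDd2 t : 0 <= t <= 1 -> continuous (fun s => Derive (fun r => snd (del r)) s) t.
Proof.
  intros H. apply (continuous_ext_loc _ dl2); [| apply (cdl2 K f Hf gam z1 z2 Hgam); lra].
  eapply filter_imp; [| apply loc_O, H]. intros y Hy. cbv beta. symmetry; apply Dd2, Hy.
Qed.

Lemma del_C1 : C1_curve strip del (f z1) (f z2).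
Proof.
  destruct Hgam as [H0 [H1 [HD _]]].
  split; [| split; [| split]].
  - unfold P12.del. rewrite sig0, H0. reflexivity.
  - unfold P12.del. rewrite sig1, H1. reflexivity.
  - intros t Ht. destruct Hf as [Hmap _]. unfold P12.del. apply Hmap, HD, sig_range; lra.
  - intros t Ht. split; [| split; [| split]].
    + eexists; apply (del1_d K f Hf gam z1 z2 Hgam); lra.
    + eexists; apply (del2_d K f Hf gam z1 z2 Hgam); lra.
    + apply cDd1, Ht.
    + apply cDd2, Ht.
Qed.

Definition FU s := rho_U (gam s) * Cmod (curve_deriv gam s).
Definition FS t := rho_S (del t) * Cmod (curve_deriv del t).

Lemma cFU s : 0 <= s <= 1 -> continuous FU s.
Proof.
  intros Hs. destruct Hgam as [_ [_ [HD HC]]]. destruct (HC s Hs) as [E1 [E2 [C1 C2]]].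
  assert (c1 : continuous (fun r => fst (gam r)) s) by (apply (ex_derive_continuous (K:=R_AbsRing) (V:=R_NormedModule)); exact E1).
  assert (c2 : continuous (fun r => snd (gam r)) s) by (apply (ex_derive_continuous (K:=R_AbsRing) (V:=R_NormedModule)); exact E2).
  assert (Hd := HD s Hs). unfold unit_disk in Hd.
  unfold FU, rho_U. apply cR_mult.
  - apply cR_div. apply cR_const. apply cR_minus. apply cR_const. apply cR_pow.
    unfold Cmod. apply cR_sqrt. apply cR_plus; apply cR_pow; assumption.
    assert (0 <= Cmod (gam s)) by apply Cmod_ge_0. nra.
  - change (continuous (fun y => sqrt (Derive (fun r => fst (gam r)) y ^ 2 + Derive (fun r => snd (gam r)) y ^ 2)) s).
    apply cR_sqrt. apply cR_plus; apply cR_pow; assumption.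
Qed.

Lemma del_strip t : 0 <= t <= 1 -> - 1 < fst (del t) < 1.
Proof. intros H. destruct Hgam as [_ [_ [HD _]]]. destruct Hf as [Hmap _].
  apply (Hmap (gam (sig t))), HD, sig_range; lra. Qed.

Lemma cos_strip u : - 1 < u < 1 -> 0 < cos (PI / 2 * u).
Proof. intros H. replace (PI / 2 * u) with (PI * u / 2) by field. apply cos_half_pos, H. Qed.

Lemma cFS t : 0 <= t <= 1 -> continuous FS t.
Proof.
  intros Ht.
  assert (c1 : continuous (fun r => fst (del r)) t).
  { apply (ex_derive_continuous (K:=R_AbsRing) (V:=R_NormedModule)). eexists; apply (del1_d K f Hf gam z1 z2 Hgam); lra. }
  unfold FS, rho_S. apply cR_mult.
  - apply cR_div. apply cR_const. apply cR_cos. apply cR_mult. apply cR_const. exact c1.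
    assert (H := cos_strip _ (del_strip t Ht)). lra.
  - change (continuous (fun y => sqrt (Derive (fun r => fst (del r)) y ^ 2 + Derive (fun r => snd (del r)) y ^ 2)) t).
    apply cR_sqrt. apply cR_plus; apply cR_pow; [apply cDd1 | apply cDd2]; exact Ht.
Qed.

Lemma pt_ineq t : 0 < t < 1 -> FS t <= K * (dsig t * FU (sig t)).
Proof.
  intros Ht.
  set (q := gam (sig t)).
  set (Wv := curve_deriv gam (sig t)).
  assert (HZ : curve_deriv del t =
     Cmult (Cplus (Cmult (f_z f (fst q, snd q)) Wv) (Cmult (f_zbar f (fst q, snd q)) (Cconj Wv))) (RtoC (dsig t))).
  { unfold curve_deriv at 1. rewrite Dd1, Dd2 by lra.
    unfold P12.dl1, P12.dl2, W1, W2, P12.P1, P12.P2, f_z, f_zbar, Cmult, Cplus, Cconj, RtoC, Wv, curve_deriv.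
    fold q. apply injective_projections; cbn [fst snd]; field. }
  unfold FS, FU. rewrite HZ. fold q Wv.
  unfold P12.del. fold q.
  rewrite Cmod_mult, Cmod_R.
  assert (Hds : 0 <= dsig t) by (unfold dsig; nra).
  rewrite (Rabs_pos_eq _ Hds).
  set (A := Cmod (f_z f (fst q, snd q))). set (B := Cmod (f_zbar f (fst q, snd q))).
  assert (HT : Cmod (Cplus (Cmult (f_z f (fst q, snd q)) Wv) (Cmult (f_zbar f (fst q, snd q)) (Cconj Wv))) <= (A + B) * Cmod Wv).
  { eapply Rle_trans; [apply Cmod_triangle|]. rewrite !Cmod_mult, Cmod_conj. fold A B. lra. }
  assert (HPD : Dk (fst q) (snd q)) by (apply (PD gam z1 z2 Hgam t); lra).
  assert (HPK := PK K f HK Hf (fst q) (snd q) HPD). fold A B in HPK.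
  rewrite <- surjective_pairing in HPK.
  assert (Hrs : 0 <= rho_S (f q)).
  { unfold rho_S. assert (H := cos_strip _ (del_strip t ltac:(lra))). unfold P12.del in H. fold q in H.
    apply Rdiv_le_0_compat; [assert (HP := PI_RGT_0); lra | exact H]. }
  assert (HW : 0 <= Cmod Wv) by apply Cmod_ge_0.
  set (Z := Cmod (Cplus (Cmult (f_z f (fst q, snd q)) Wv) (Cmult (f_zbar f (fst q, snd q)) (Cconj Wv)))) in *.
  apply Rle_trans with (rho_S (f q) * ((A + B) * Cmod Wv * dsig t)).
  - apply Rmult_le_compat_l; auto. apply Rmult_le_compat_r; auto.
  - replace (rho_S (f q) * ((A + B) * Cmod Wv * dsig t)) with ((rho_S (f q) * (A + B)) * (Cmod Wv * dsig t)) by ring.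
    replace (K * (dsig t * (rho_U q * Cmod Wv))) with ((K * rho_U q) * (Cmod Wv * dsig t)) by ring.
    apply Rmult_le_compat_r; [nra | exact HPK].
Qed.

Lemma cG t : 0 <= t <= 1 -> continuous (fun t => dsig t * FU (sig t)) t.
Proof. intros H. apply cR_mult. apply c_dsig.
  apply (continuous_comp sig FU). apply c_sig. apply cFU, sig_range; lra. Qed.

Lemma len_le : curve_length rho_S del <= K * curve_length rho_U gam.
Proof.
  change (RInt FS 0 1 <= K * RInt FU 0 1).
  assert (E : RInt FU 0 1 = RInt (fun t => dsig t * FU (sig t)) 0 1).
  { rewrite <- sig0 at 1. rewrite <- sig1 at 1. symmetry.
    apply (RInt_comp (V:=R_CompleteNormedModule) FU sig dsig).
    - intros x Hx. rewrite Rmin_left, Rmax_right in Hx by lra. apply cFU, sig_range; lra.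
    - intros x Hx. split. apply sig_d. apply c_dsig. }
  rewrite E.
  assert (Ex : ex_RInt (fun t => dsig t * FU (sig t)) 0 1).
  { apply (ex_RInt_continuous (V:=R_CompleteNormedModule)). intros z Hz.
    rewrite Rmin_left, Rmax_right in Hz by lra. apply cG, Hz. }
  assert (I := isR_scal _ _ _ _ K (@RInt_correct R_CompleteNormedModule _ _ _ Ex)).
  rewrite <- (is_RInt_unique _ _ _ _ I).
  apply RInt_le. lra.
  - apply (ex_RInt_continuous (V:=R_CompleteNormedModule)). intros z Hz.
    rewrite Rmin_left, Rmax_right in Hz by lra. apply cFS, Hz.
  - eexists; exact I.
  - intros x Hx. apply pt_ineq, Hx.
Qed.
End Curve2.

End P13.
Import P13.

Module P14.
Open Scope R_scope.

Lemma glb_scale (ES EU : R -> Prop) (K : R) : 0 < K ->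
  (forall L, EU L -> exists L', ES L' /\ L' <= K * L) ->
  Rbar_le (Glb_Rbar ES) (Rbar_mult K (Glb_Rbar EU)).
Proof.
  intros HK H.
  destruct (Glb_Rbar_correct ES) as [lbS glbS].
  destruct (Glb_Rbar_correct EU) as [lbU glbU].
  assert (NE : Glb_Rbar EU <> p_infty -> exists L, EU L).
  { intros Hne. destruct (Classical_Prop.classic (exists L, EU L)) as [h|h]; auto.
    exfalso. apply Hne. apply Rbar_le_antisym; [destruct (Glb_Rbar EU); simpl; auto|].
    apply glbU. intros x Hx. exfalso; apply h; exists x; exact Hx. }
  destruct (Glb_Rbar EU) as [u| |] eqn:Eu.
  - destruct (Glb_Rbar ES) as [s| |] eqn:Es.
    + simpl. assert (Hlb : is_lb_Rbar EU (Finite (s / K))).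
      { intros L HL. destruct (H L HL) as [L' [HL' HLe]]. assert (A := lbS L' HL'). simpl in A.
        simpl. apply (Rmult_le_reg_r K); auto. unfold Rdiv; rewrite Rmult_assoc, Rinv_l, Rmult_1_r by lra. nra. }
      assert (A := glbU _ Hlb). simpl in A.
      apply (Rmult_le_reg_r (/ K)). apply Rinv_0_lt_compat; auto.
      replace (K * u * / K) with u by (field; lra). exact A.
    + exfalso. destruct (NE ltac:(discriminate)) as [L HL]. destruct (H L HL) as [L' [HL' _]].
      assert (A := lbS L' HL'). simpl in A. exact A.
    + simpl; auto.
  - assert (E : Rbar_mult K p_infty = p_infty).
    { unfold Rbar_mult, Rbar_mult'. destruct (Rle_dec 0 K) as [h|h]; [| lra].
      destruct (Rle_lt_or_eq_dec 0 K h); [reflexivity | lra]. }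
    rewrite E. destruct (Glb_Rbar ES); simpl; auto.
  - assert (E : Rbar_mult K m_infty = m_infty).
    { unfold Rbar_mult, Rbar_mult'. destruct (Rle_dec 0 K) as [h|h]; [| lra].
      destruct (Rle_lt_or_eq_dec 0 K h); [reflexivity | lra]. }
    rewrite E.
    destruct (Glb_Rbar ES) as [s| |] eqn:Es; simpl; auto.
    + assert (Hlb : is_lb_Rbar EU (Finite (s / K - 1))).
      { intros L HL. destruct (H L HL) as [L' [HL' HLe]]. assert (A := lbS L' HL'). simpl in A.
        simpl. apply (Rmult_le_reg_r K); auto. unfold Rminus, Rdiv.
        rewrite Rmult_plus_distr_r, Rmult_assoc, Rinv_l, Rmult_1_r by lra. nra. }
      assert (A := glbU _ Hlb). simpl in A. exact A.
    + destruct (NE ltac:(discriminate)) as [L HL]. destruct (H L HL) as [L' [HL' _]].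
      assert (A := lbS L' HL'). simpl in A. exact A.
Qed.

End P14.
Import P14.

Theorem lemma4 (K : R) (f : C -> C) :
  1 <= K -> HQR K unit_disk strip f ->
  forall z1 z2 : C, unit_disk z1 -> unit_disk z2 ->
    Rbar_le (d_S (f z1) (f z2)) (Rbar_mult K (d_U z1 z2)).
Proof.
  intros HK Hf z1 z2 _ _. unfold d_S, d_U, hdist.
  apply glb_scale; [lra|].
  intros L [gam [Hgam ->]].
  exists (curve_length rho_S (del f gam)). split.
  - exists (del f gam). split; [apply (del_C1 K f Hf gam z1 z2 Hgam) | reflexivity].
  - apply (len_le K f HK Hf gam z1 z2 Hgam).
Qed.
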